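(* Let $b>0$, $c$ be constants and $m\ge1$ an integer, and let $\phi(s)=\frac{\sqrt{b^2-s^2}}{b}+\sqrt{b^2-s^2}\int_0^s\frac{c\,(t^2)^{m-1/2}}{(b^2-t^2)^{3/2}}dt$. On $\mathbb{R}^2\setminus\{0\}$ let $$\alpha=e^{\sigma}\sqrt{(y^1)^2+(y^2)^2},\quad \beta=\frac{b\,e^{\sigma}(x^2y^1-x^1y^2)}{\sqrt{(x^1)^2+(x^2)^2}},\quad \sigma=(m-1)\ln[(x^1)^2+(x^2)^2].$$ Then $F=\alpha\phi(\beta/\alpha)$ is projectively flat and $\beta$ is not closed.
   Context: For a Riemannian metric $\alpha$ and a 1-form $\beta$, $\beta$ is closed if $d\beta=0$. The spray coefficients of a Finsler metric $F$ are $G^i=\frac14 g^{il}\{[F^2]_{x^ky^l}y^k-[F^2]_{x^l}\}$ with $g_{ij}=\frac12[F^2]_{y^iy^j}$. $F$ is projectively flat on an open $U\subset\mathbb{R}^n$ if $G^i=P(x,y)y^i$ in the standard coordinates of $U$ for some function $P$. *)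

(* Defs.v *)
From Stdlib Require Import Reals Lra ClassicalEpsilon.
Open Scope R_scope.

(* The derivative of a one-variable function at x (the unique l with
   derivable_pt_lim f x l); 0 if f is not differentiable at x. *)
Definition deriv1 (f : R -> R) (x : R) : R :=
  match excluded_middle_informative (exists l, derivable_pt_lim f x l) with
  | left H => proj1_sig (constructive_indefinite_description _ H)
  | right _ => 0
  end.

(* Oriented Riemann integral of f from a to b (0 if f not Riemann integrable). *)
Definition RInt (f : R -> R) (a b : R) : R :=
  match excluded_middle_informative
          (exists _ : Riemann_integrable f a b, True) with
  | left H => RiemannInt (proj1_sig (constructive_indefinite_description _ H))
  | right _ => 0
  end.

Definition R2 := (R * R)%type.

Definition coord (v : R2) (k : nat) : R :=
  match k with 1%nat => fst v | _ => snd v end.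

Definition upd (v : R2) (k : nat) (t : R) : R2 :=
  match k with 1%nat => (t, snd v) | _ => (fst v, t) end.

Definition Dx (k : nat) (E : R2 -> R2 -> R) : R2 -> R2 -> R :=
  fun x y => deriv1 (fun t => E (upd x k t) y) (coord x k).
Definition Dy (k : nat) (E : R2 -> R2 -> R) : R2 -> R2 -> R :=
  fun x y => deriv1 (fun t => E x (upd y k t)) (coord y k).

Definition Fsq (F : R2 -> R2 -> R) : R2 -> R2 -> R := fun x y => (F x y) ^ 2.

Definition gmet (F : R2 -> R2 -> R) (i j : nat) : R2 -> R2 -> R :=
  fun x y => / 2 * Dy i (Dy j (Fsq F)) x y.

Definition ginv (F : R2 -> R2 -> R) (i j : nat) (x y : R2) : R :=
  let g11 := gmet F 1 1 x y in
  let g12 := gmet F 1 2 x y in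
  let g21 := gmet F 2 1 x y in
  let g22 := gmet F 2 2 x y in
  let det := g11 * g22 - g12 * g21 in
  match i, j with
  | 1%nat, 1%nat => g22 / det
  | 1%nat, _ => - g12 / det
  | _, 1%nat => - g21 / det
  | _, _ => g11 / det
  end.

Definition sprayTerm (F : R2 -> R2 -> R) (l : nat) (x y : R2) : R :=
  Dy l (Dx 1 (Fsq F)) x y * fst y + Dy l (Dx 2 (Fsq F)) x y * snd y
  - Dx l (Fsq F) x y.

Definition spray (F : R2 -> R2 -> R) (i : nat) (x y : R2) : R :=
  / 4 * (ginv F i 1 x y * sprayTerm F 1 x y + ginv F i 2 x y * sprayTerm F 2 x y).

(* F is projectively flat on the set D ⊂ TU (of (x,y) where F is a
   Finsler metric): G^i = P(x,y) y^i for some function P. *)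
Definition projectively_flat_on (F : R2 -> R2 -> R) (D : R2 -> R2 -> Prop) : Prop :=
  exists P : R2 -> R2 -> R,
    forall x y, D x y ->
      spray F 1 x y = P x y * fst y /\ spray F 2 x y = P x y * snd y.

(* A 1-form w = w_1(x) dx^1 + w_2(x) dx^2, given as w(x, y) = w_i(x) y^i,
   is closed on U iff dw = 0, i.e. d(w_2)/dx^1 = d(w_1)/dx^2 on U. *)
Definition closed_1form (w : R2 -> R2 -> R) (U : R2 -> Prop) : Prop :=
  forall x, U x ->
    Dx 1 (fun x' _ => w x' (0, 1)) x (0, 0) = Dx 2 (fun x' _ => w x' (1, 0)) x (0, 0).

Definition punctured (x : R2) : Prop := x <> (0, 0).

Definition sigma (m : nat) (x : R2) : R :=
  (INR m - 1) * ln (fst x ^ 2 + snd x ^ 2).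

Definition alpha (m : nat) (x y : R2) : R :=
  exp (sigma m x) * sqrt (fst y ^ 2 + snd y ^ 2).

Definition beta (b : R) (m : nat) (x y : R2) : R :=
  b * exp (sigma m x) * (snd x * fst y - fst x * snd y)
    / sqrt (fst x ^ 2 + snd x ^ 2).

(* phi(s) = sqrt(b^2-s^2)/b + sqrt(b^2-s^2) * int_0^s c (t^2)^(m-1/2) / (b^2-t^2)^(3/2) dt,
   where (t^2)^(m-1/2) = |t|^(2m-1) for the integer m >= 1. *)
Definition phi (b c : R) (m : nat) (s : R) : R :=
  sqrt (b ^ 2 - s ^ 2) / b
  + sqrt (b ^ 2 - s ^ 2) *
      RInt (fun t => c * Rabs t ^ (2 * m - 1) / Rpower (b ^ 2 - t ^ 2) (3 / 2)) 0 s.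

Definition Fmetric (b c : R) (m : nat) (x y : R2) : R :=
  alpha m x y * phi b c m (beta b m x y / alpha m x y).

(* The region of TU where F is a (regular) Finsler metric:
   x <> 0, y <> 0 and |beta/alpha| < b. *)
Definition regular_dom (b : R) (m : nat) (x y : R2) : Prop :=
  punctured x /\ y <> (0, 0) /\ Rabs (beta b m x y / alpha m x y) < b.

(* Main.v *)
Require Import Defs.
From Stdlib Require Import Reals Lra Lia ClassicalEpsilon Classical.
From Coquelicot Require Import Coquelicot.
Open Scope R_scope.

Lemma deriv1_is f x l : is_derive f x l -> deriv1 f x = l.
Proof.
  intros H. apply is_derive_Reals in H. unfold deriv1.
  destruct excluded_middle_informative as [e|n].
  - destruct constructive_indefinite_description as [l' Hl']. simpl.
    eapply uniqueness_limite; eauto.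
  - exfalso; apply n; eauto.
Qed.

Lemma deriv1_ex f x : ex_derive f x -> deriv1 f x = Derive f x.
Proof. intros H. apply deriv1_is. apply Derive_correct; auto. Qed.

Lemma deriv1_nex f x : ~ ex_derive f x -> deriv1 f x = 0.
Proof.
  intros H. unfold deriv1. destruct excluded_middle_informative as [e|n]; auto.
  exfalso; apply H. destruct e as [l Hl]. exists l. apply is_derive_Reals; auto.
Qed.

Lemma deriv1_loc f g x : locally x (fun t => f t = g t) -> deriv1 f x = deriv1 g x.
Proof.
  intros H. destruct (classic (ex_derive g x)) as [Hg|Hg].
  - rewrite (deriv1_ex g) by auto. apply deriv1_is.
    apply (is_derive_ext_loc g f).
    + eapply filter_imp; [|exact H]. intros t Ht; simpl; auto.
    + apply Derive_correct; auto.
  - rewrite (deriv1_nex g) by auto. apply deriv1_nex. intros [l Hl]. apply Hg.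
    exists l. apply (is_derive_ext_loc f g); auto.
Qed.

Lemma loc_neq (f : R -> R) x : continuous f x -> f x <> 0 -> locally x (fun t => f t <> 0).
Proof.
  intros Hc H0.
  assert (Hpos : 0 < Rabs (f x)) by (apply Rabs_pos_lt; auto).
  apply (Hc (fun y => y <> 0)).
  exists (mkposreal _ Hpos). intros y Hy. simpl in Hy.
  unfold ball in Hy; simpl in Hy. unfold AbsRing_ball, abs, minus, plus, opp in Hy; simpl in Hy.
  intros ->. rewrite Rplus_0_l, Rabs_Ropp in Hy. lra.
Qed.

Lemma loc_lin a c0 t0 : a*t0+c0 <> 0 -> locally t0 (fun t => a*t+c0 <> 0).
Proof.
  intros H.
  assert (Hc : continuous (fun t => a*t+c0) t0).
  { apply (ex_derive_continuous (fun t => a*t+c0)). auto_derive. auto. }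
  exact (loc_neq (fun t => a*t+c0) t0 Hc H).
Qed.

Lemma abs_nd (sg : R -> R) t0 ds : is_derive sg t0 ds -> sg t0 = 0 -> ds <> 0 ->
  ~ ex_derive (fun t => Rabs (sg t)) t0.
Proof.
  intros Hs H0 Hds [d Hd].
  apply is_derive_Reals in Hs. apply is_derive_Reals in Hd.
  assert (Ha : 0 < Rabs ds) by (apply Rabs_pos_lt; auto).
  destruct (Hs (Rabs ds / 2)) as [d1 H1]; [lra|].
  destruct (Hd (Rabs ds / 4)) as [d2 H2]; [lra|].
  set (h := Rmin d1 d2 / 2).
  assert (hp : 0 < h) by (unfold h; pose proof (cond_pos d1); pose proof (cond_pos d2);
     apply Rmin_case; lra).
  assert (hl1 : h < d1) by (unfold h; pose proof (cond_pos d1); pose proof (cond_pos d2);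
     pose proof (Rmin_l d1 d2); lra).
  assert (hl2 : h < d2) by (unfold h; pose proof (cond_pos d1); pose proof (cond_pos d2);
     pose proof (Rmin_r d1 d2); lra).
  assert (Hh : h <> 0) by lra. assert (Hh' : -h <> 0) by lra.
  assert (Ah : Rabs h < d1) by (rewrite Rabs_right; lra).
  assert (Ah2 : Rabs h < d2) by (rewrite Rabs_right; lra).
  assert (Ahm : Rabs (-h) < d1) by (rewrite Rabs_Ropp, Rabs_right; lra).
  assert (Ahm2 : Rabs (-h) < d2) by (rewrite Rabs_Ropp, Rabs_right; lra).
  pose proof (H1 h Hh Ah) as A1. pose proof (H1 (-h) Hh' Ahm) as A2.
  pose proof (H2 h Hh Ah2) as B1. pose proof (H2 (-h) Hh' Ahm2) as B2.
  rewrite H0 in A1, A2, B1, B2. rewrite Rabs_R0 in B1, B2.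
  set (X := sg (t0 + h)) in *. set (Z := sg (t0 + - h)) in *.
  replace ((X - 0)/h) with (X/h) in A1 by (field; lra).
  replace ((Z - 0)/(-h)) with (-(Z/h)) in A2 by (field; lra).
  replace ((Rabs X - 0)/h) with (Rabs X/h) in B1 by (field; lra).
  replace ((Rabs Z - 0)/(-h)) with (-(Rabs Z/h)) in B2 by (field; lra).
  assert (EX : Rabs X / h = Rabs (X/h)) by (unfold Rdiv; rewrite Rabs_mult, Rabs_inv, (Rabs_right h); lra).
  assert (EZ : Rabs Z / h = Rabs (Z/h)) by (unfold Rdiv; rewrite Rabs_mult, Rabs_inv, (Rabs_right h); lra).
  rewrite EX in B1. rewrite EZ in B2.
  set (p := X/h) in *. set (r := Z/h) in *.
  apply Rabs_def2 in A1. apply Rabs_def2 in A2. apply Rabs_def2 in B1. apply Rabs_def2 in B2.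
  destruct (Rle_dec 0 ds).
  - rewrite (Rabs_right ds) in *; try lra.
    rewrite (Rabs_right p) in B1 by lra.
    rewrite (Rabs_left r) in B2 by lra. lra.
  - rewrite (Rabs_left ds) in *; try lra.
    rewrite (Rabs_left p) in B1 by lra.
    rewrite (Rabs_right r) in B2 by lra. lra.
Qed.

Lemma kink a B sg t0 da dB ds : is_derive a t0 da -> is_derive B t0 dB -> is_derive sg t0 ds ->
  sg t0 = 0 -> ds <> 0 -> B t0 <> 0 -> ~ ex_derive (fun t => a t + B t * Rabs (sg t)) t0.
Proof.
  intros Ha HB Hs H0 Hds HB0 [d Hd].
  assert (Hk : is_derive (fun t => B t * Rabs (sg t)) t0 (d - da)).
  { apply (is_derive_ext (fun t => (a t + B t * Rabs (sg t)) - a t)).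
    - intros t; simpl; ring.
    - apply (is_derive_minus _ _ _ d da); auto. }
  pose proof (is_derive_div _ _ _ _ _ Hk HB HB0) as Hq.
  apply (abs_nd sg t0 ds Hs H0 Hds).
  eexists. apply (is_derive_ext_loc (fun t => B t * Rabs (sg t) / B t)); [|exact Hq].
  assert (Hc : continuous B t0) by (apply ex_derive_continuous; eexists; eauto).
  pose proof (loc_neq B t0 Hc HB0) as L.
  eapply filter_imp; [|exact L]. intros t Ht. simpl. field. auto.
Qed.

Section CoreS.
Variables (Ph jf hh : R -> R) (b mm : R).
Hypothesis hb : 0 < b.
Hypothesis HPh : forall z, -b < z < b -> is_derive Ph z (b * jf z).
Hypothesis Hhh : forall z, -b < z < b -> is_derive hh z (jf z * (2*mm + 3*z^2/(b^2-z^2))).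
Hypothesis Hhhd : forall z, hh z = z * jf z.

Definition qf x1 x2 := x1*x1+x2*x2.
Definition uf x1 x2 y1 y2 := x1*y1+x2*y2.
Definition wf x1 x2 y1 y2 := x2*y1 - x1*y2.
Definition sf x1 x2 y1 y2 := b*(x2*y1 - x1*y2)/(sqrt (qf x1 x2) * sqrt (qf y1 y2)).
Definition eef x1 x2 := exp ((mm-1)*ln (qf x1 x2)).
Definition Af x1 x2 y1 y2 := eef x1 x2 ^2 * (x1*y1+x2*y2)^2 / qf x1 x2.
Definition Ef x1 x2 y1 y2 := Af x1 x2 y1 y2 * Ph (sf x1 x2 y1 y2) ^ 2.

Definition sx1 x1 x2 y1 y2 := b*(-y2)/(sqrt (qf x1 x2) * sqrt (qf y1 y2))
  - b*(x2*y1-x1*y2)*x1/(sqrt (qf x1 x2)^3 * sqrt (qf y1 y2)).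
Definition sx2 x1 x2 y1 y2 := b*y1/(sqrt (qf x1 x2) * sqrt (qf y1 y2))
  - b*(x2*y1-x1*y2)*x2/(sqrt (qf x1 x2)^3 * sqrt (qf y1 y2)).
Definition sy1 x1 x2 y1 y2 := b*x2/(sqrt (qf x1 x2) * sqrt (qf y1 y2))
  - b*(x2*y1-x1*y2)*y1/(sqrt (qf x1 x2) * sqrt (qf y1 y2)^3).
Definition sy2 x1 x2 y1 y2 := b*(-x1)/(sqrt (qf x1 x2) * sqrt (qf y1 y2))
  - b*(x2*y1-x1*y2)*y2/(sqrt (qf x1 x2) * sqrt (qf y1 y2)^3).
Definition Ax1 x1 x2 y1 y2 := eef x1 x2 ^2 / qf x1 x2 *
  (2*(x1*y1+x2*y2)*y1 + (x1*y1+x2*y2)^2*(4*mm-6)*x1/qf x1 x2).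
Definition Ax2 x1 x2 y1 y2 := eef x1 x2 ^2 / qf x1 x2 *
  (2*(x1*y1+x2*y2)*y2 + (x1*y1+x2*y2)^2*(4*mm-6)*x2/qf x1 x2).
Definition Ay1 x1 x2 y1 y2 := eef x1 x2 ^2 / qf x1 x2 * (2*(x1*y1+x2*y2)*x1).
Definition Ay2 x1 x2 y1 y2 := eef x1 x2 ^2 / qf x1 x2 * (2*(x1*y1+x2*y2)*x2).
Definition Ex1 x1 x2 y1 y2 := Ph (sf x1 x2 y1 y2) * (Ax1 x1 x2 y1 y2 * Ph (sf x1 x2 y1 y2)
  + 2 * Af x1 x2 y1 y2 * b * jf (sf x1 x2 y1 y2) * sx1 x1 x2 y1 y2).
Definition Ex2 x1 x2 y1 y2 := Ph (sf x1 x2 y1 y2) * (Ax2 x1 x2 y1 y2 * Ph (sf x1 x2 y1 y2)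
  + 2 * Af x1 x2 y1 y2 * b * jf (sf x1 x2 y1 y2) * sx2 x1 x2 y1 y2).
Definition Ey1 x1 x2 y1 y2 := Ph (sf x1 x2 y1 y2) * (Ay1 x1 x2 y1 y2 * Ph (sf x1 x2 y1 y2)
  + 2 * Af x1 x2 y1 y2 * b * jf (sf x1 x2 y1 y2) * sy1 x1 x2 y1 y2).
Definition Ey2 x1 x2 y1 y2 := Ph (sf x1 x2 y1 y2) * (Ay2 x1 x2 y1 y2 * Ph (sf x1 x2 y1 y2)
  + 2 * Af x1 x2 y1 y2 * b * jf (sf x1 x2 y1 y2) * sy2 x1 x2 y1 y2).
Definition DAf x1 x2 y1 y2 := eef x1 x2 ^2 / qf x1 x2 *
  (2*(x1*y1+x2*y2)*qf y1 y2 + (4*mm-6)*(x1*y1+x2*y2)^3/qf x1 x2).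
Definition DEf x1 x2 y1 y2 := Ph (sf x1 x2 y1 y2) * (DAf x1 x2 y1 y2 * Ph (sf x1 x2 y1 y2)
  - 2 * Af x1 x2 y1 y2 * b * (x1*y1+x2*y2) / qf x1 x2 * hh (sf x1 x2 y1 y2)).

Lemma qpos_x x1 x2 y1 y2 : x1*y1+x2*y2 <> 0 -> 0 < x1*x1+x2*x2.
Proof. intros H. destruct (Req_dec x1 0); destruct (Req_dec x2 0); subst; try nra.
Qed.
Lemma qpos_y x1 x2 y1 y2 : x1*y1+x2*y2 <> 0 -> 0 < y1*y1+y2*y2.
Proof. intros H. destruct (Req_dec y1 0); destruct (Req_dec y2 0); subst; try nra.
Qed.

Lemma sbound x1 x2 y1 y2 : x1*y1+x2*y2 <> 0 -> -b < sf x1 x2 y1 y2 < b.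
Proof.
intros Hu. pose proof (qpos_x _ _ _ _ Hu). pose proof (qpos_y _ _ _ _ Hu).
unfold sf, qf.
set (R := sqrt (x1*x1+x2*x2)). set (Y := sqrt (y1*y1+y2*y2)).
assert (HR : R*R = x1*x1+x2*x2) by (apply sqrt_sqrt; lra).
assert (HY : Y*Y = y1*y1+y2*y2) by (apply sqrt_sqrt; lra).
assert (0 < R) by (apply sqrt_lt_R0; lra).
assert (0 < Y) by (apply sqrt_lt_R0; lra).
assert (Hw : (x2*y1-x1*y2)^2 < (R*Y)^2).
{ replace ((R*Y)^2) with ((R*R)*(Y*Y)) by ring. rewrite HR, HY.
  assert (0 < (x1*y1+x2*y2)^2) by (apply pow2_gt_0; auto). nra. }
assert (0 < R*Y) by nra.
assert (H4 : -(R*Y) < x2*y1-x1*y2 < R*Y) by (split; nra).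
split.
- apply (Rmult_lt_reg_r (R*Y)); auto. unfold Rdiv. rewrite Rmult_assoc, Rinv_l by lra. nra.
- apply (Rmult_lt_reg_r (R*Y)); auto. unfold Rdiv. rewrite Rmult_assoc, Rinv_l by lra. nra.
Qed.


Lemma DPh z : -b < z < b -> Derive (fun x => Ph x) z = b * jf z.
Proof. intros H. apply is_derive_unique. apply HPh; auto. Qed.
Lemma EPh z : -b < z < b -> ex_derive (fun x => Ph x) z.
Proof. intros H. eexists. apply HPh; auto. Qed.
Lemma Dhh z : -b < z < b -> Derive (fun x => hh x) z = jf z * (2*mm + 3*z^2/(b^2-z^2)).
Proof. intros H. apply is_derive_unique. apply Hhh; auto. Qed.
Lemma Ehh z : -b < z < b -> ex_derive (fun x => hh x) z.
Proof. intros H. eexists. apply Hhh; auto. Qed.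

Ltac prep x1 x2 y1 y2 Hu :=
  let Hq := fresh "Hq" in let Hy := fresh "Hy" in let Hs := fresh "Hs" in
  pose proof (qpos_x _ _ _ _ Hu) as Hq; pose proof (qpos_y _ _ _ _ Hu) as Hy;
  pose proof (sbound _ _ _ _ Hu) as Hs.

Ltac side := rewrite ?Rmult_1_r; repeat split; try (match goal with H : ex_derive jf _ |- _ => exact H end);
  try (apply EPh; assumption); try (apply Ehh; assumption); try assumption;
  try (apply Rgt_not_eq; assumption);
  try (repeat apply Rmult_integral_contrapositive_currified; apply Rgt_not_eq, sqrt_lt_R0; assumption).

Ltac fin x1 x2 y1 y2 := rewrite ?Rmult_1_r; rewrite ?DPh by assumption; rewrite ?Dhh by assumption;
  unfold Ex1, Ex2, Ey1, Ey2, Ax1, Ax2, Ay1, Ay2, Af, sx1, sx2, sy1, sy2, eef, sf, qf;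
  let R := fresh "R" in let Y := fresh "Y" in let e := fresh "e" in
  set (R := sqrt (x1*x1+x2*x2)) in *;
  set (Y := sqrt (y1*y1+y2*y2)) in *;
  try set (e := exp _) in *;
  let HR := fresh in let HY := fresh in
  assert (HR : R^2 = x1*x1+x2*x2) by (unfold R; rewrite <- Rsqr_pow2, Rsqr_sqrt; lra);
  assert (HY : Y^2 = y1*y1+y2*y2) by (unfold Y; rewrite <- Rsqr_pow2, Rsqr_sqrt; lra);
  assert (R <> 0) by (unfold R; apply Rgt_not_eq, sqrt_lt_R0; auto);
  assert (Y <> 0) by (unfold Y; apply Rgt_not_eq, sqrt_lt_R0; auto);
  unfold Rminus, Rdiv; field [HR HY]; repeat split; auto; lra.

Lemma dEx1 x1 x2 y1 y2 : x1*y1+x2*y2 <> 0 ->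
  is_derive (fun t => Ef t x2 y1 y2) x1 (Ex1 x1 x2 y1 y2).
Proof. intros Hu. prep x1 x2 y1 y2 Hu. unfold Ef, Af, eef, sf, qf in *.
  auto_derive; [side | fin x1 x2 y1 y2]. Qed.

Lemma dEx2 x1 x2 y1 y2 : x1*y1+x2*y2 <> 0 ->
  is_derive (fun t => Ef x1 t y1 y2) x2 (Ex2 x1 x2 y1 y2).
Proof. intros Hu. prep x1 x2 y1 y2 Hu. unfold Ef, Af, eef, sf, qf in *.
  auto_derive; [side | fin x1 x2 y1 y2]. Qed.
Lemma dEy1 x1 x2 y1 y2 : x1*y1+x2*y2 <> 0 ->
  is_derive (fun t => Ef x1 x2 t y2) y1 (Ey1 x1 x2 y1 y2).
Proof. intros Hu. prep x1 x2 y1 y2 Hu. unfold Ef, Af, eef, sf, qf in *.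
  auto_derive; [side | fin x1 x2 y1 y2]. Qed.
Lemma dEy2 x1 x2 y1 y2 : x1*y1+x2*y2 <> 0 ->
  is_derive (fun t => Ef x1 x2 y1 t) y2 (Ey2 x1 x2 y1 y2).
Proof. intros Hu. prep x1 x2 y1 y2 Hu. unfold Ef, Af, eef, sf, qf in *.
  auto_derive; [side | fin x1 x2 y1 y2]. Qed.

Lemma sidelem x1 x2 y1 y2 R Y : R^2 = x1*x1+x2*x2 -> Y^2 = y1*y1+y2*y2 -> x1*y1+x2*y2 <> 0 ->
  (b * (R * Y)) ^ 2 + - (b * (x2 * y1 + - (x1 * y2))) ^ 2 <> 0.
Proof. intros H H0 Hu. replace ((b * (R * Y)) ^ 2 + - (b * (x2 * y1 + - (x1 * y2))) ^ 2)
  with (b^2*(x1*y1+x2*y2)^2) by ring [H H0].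
  apply Rmult_integral_contrapositive_currified; apply pow_nonzero; lra. Qed.

Ltac fin2 x1 x2 y1 y2 := rewrite ?Rmult_1_r; rewrite ?DPh by assumption; rewrite ?Dhh by assumption;
  unfold Ef, DEf, DAf, Ex1, Ex2, Ey1, Ey2, Ax1, Ax2, Ay1, Ay2, Af, sx1, sx2, sy1, sy2, eef, sf, qf;
  rewrite ?Hhhd;
  let R := fresh "R" in let Y := fresh "Y" in let e := fresh "e" in
  set (R := sqrt (x1*x1+x2*x2)) in *;
  set (Y := sqrt (y1*y1+y2*y2)) in *;
  try set (e := exp _) in *;
  let HR := fresh in let HY := fresh in
  assert (HR : R^2 = x1*x1+x2*x2) by (unfold R; rewrite <- Rsqr_pow2, Rsqr_sqrt; lra);
  assert (HY : Y^2 = y1*y1+y2*y2) by (unfold Y; rewrite <- Rsqr_pow2, Rsqr_sqrt; lra);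
  assert (R <> 0) by (unfold R; apply Rgt_not_eq, sqrt_lt_R0; auto);
  assert (Y <> 0) by (unfold Y; apply Rgt_not_eq, sqrt_lt_R0; auto);
  unfold Rminus, Rdiv; field [HR HY]; repeat split; auto; try lra; try (apply sidelem; assumption).

Lemma euler x1 x2 y1 y2 : x1*y1+x2*y2 <> 0 ->
  y1 * Ey1 x1 x2 y1 y2 + y2 * Ey2 x1 x2 y1 y2 = 2 * Ef x1 x2 y1 y2.
Proof. intros Hu. prep x1 x2 y1 y2 Hu. unfold qf in *. fin2 x1 x2 y1 y2. Qed.

Lemma DEid x1 x2 y1 y2 : x1*y1+x2*y2 <> 0 ->
  y1 * Ex1 x1 x2 y1 y2 + y2 * Ex2 x1 x2 y1 y2 = DEf x1 x2 y1 y2.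
Proof. intros Hu. prep x1 x2 y1 y2 Hu. unfold qf in *. fin2 x1 x2 y1 y2. Qed.

Lemma hamel1 x1 x2 y1 y2 : x1*y1+x2*y2 <> 0 -> exists l,
  is_derive (fun t => DEf x1 x2 t y2) y1 l /\
  2 * Ef x1 x2 y1 y2 * (l - 2 * Ex1 x1 x2 y1 y2) = DEf x1 x2 y1 y2 * Ey1 x1 x2 y1 y2.
Proof. intros Hu. prep x1 x2 y1 y2 Hu. eexists; split.
  - unfold DEf, DAf, Af, eef, sf, qf in *. auto_derive; [side| reflexivity].
  - unfold qf in *. fin2 x1 x2 y1 y2.
Qed.

Lemma hamel2 x1 x2 y1 y2 : x1*y1+x2*y2 <> 0 -> exists l,
  is_derive (fun t => DEf x1 x2 y1 t) y2 l /\
  2 * Ef x1 x2 y1 y2 * (l - 2 * Ex2 x1 x2 y1 y2) = DEf x1 x2 y1 y2 * Ey2 x1 x2 y1 y2.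
Proof. intros Hu. prep x1 x2 y1 y2 Hu. eexists; split.
  - unfold DEf, DAf, Af, eef, sf, qf in *. auto_derive; [side| reflexivity].
  - unfold qf in *. fin2 x1 x2 y1 y2.
Qed.

Lemma ex_Ex1_1 x1 x2 y1 y2 : x1*y1+x2*y2 <> 0 -> ex_derive jf (sf x1 x2 y1 y2) ->
  ex_derive (fun t => Ex1 x1 x2 t y2) y1.
Proof. intros Hu Hj. prep x1 x2 y1 y2 Hu.
  unfold Ex1, Ax1, Ax2, Ay1, Ay2, sx1, sx2, sy1, sy2, Af, eef, sf, qf in *. auto_derive; side. Qed.

Lemma ex_Ex1_2 x1 x2 y1 y2 : x1*y1+x2*y2 <> 0 -> ex_derive jf (sf x1 x2 y1 y2) ->
  ex_derive (fun t => Ex1 x1 x2 y1 t) y2.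
Proof. intros Hu Hj. prep x1 x2 y1 y2 Hu.
  unfold Ex1, Ax1, Ax2, Ay1, Ay2, sx1, sx2, sy1, sy2, Af, eef, sf, qf in *. auto_derive; side. Qed.

Lemma ex_Ex2_1 x1 x2 y1 y2 : x1*y1+x2*y2 <> 0 -> ex_derive jf (sf x1 x2 y1 y2) ->
  ex_derive (fun t => Ex2 x1 x2 t y2) y1.
Proof. intros Hu Hj. prep x1 x2 y1 y2 Hu.
  unfold Ex2, Ax1, Ax2, Ay1, Ay2, sx1, sx2, sy1, sy2, Af, eef, sf, qf in *. auto_derive; side. Qed.

Lemma ex_Ex2_2 x1 x2 y1 y2 : x1*y1+x2*y2 <> 0 -> ex_derive jf (sf x1 x2 y1 y2) ->
  ex_derive (fun t => Ex2 x1 x2 y1 t) y2.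
Proof. intros Hu Hj. prep x1 x2 y1 y2 Hu.
  unfold Ex2, Ax1, Ax2, Ay1, Ay2, sx1, sx2, sy1, sy2, Af, eef, sf, qf in *. auto_derive; side. Qed.

Lemma ex_Ey1_1 x1 x2 y1 y2 : x1*y1+x2*y2 <> 0 -> ex_derive jf (sf x1 x2 y1 y2) ->
  ex_derive (fun t => Ey1 x1 x2 t y2) y1.
Proof. intros Hu Hj. prep x1 x2 y1 y2 Hu.
  unfold Ey1, Ax1, Ax2, Ay1, Ay2, sx1, sx2, sy1, sy2, Af, eef, sf, qf in *. auto_derive; side. Qed.

Lemma ex_Ey1_2 x1 x2 y1 y2 : x1*y1+x2*y2 <> 0 -> ex_derive jf (sf x1 x2 y1 y2) ->
  ex_derive (fun t => Ey1 x1 x2 y1 t) y2.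
Proof. intros Hu Hj. prep x1 x2 y1 y2 Hu.
  unfold Ey1, Ax1, Ax2, Ay1, Ay2, sx1, sx2, sy1, sy2, Af, eef, sf, qf in *. auto_derive; side. Qed.

Lemma ex_Ey2_1 x1 x2 y1 y2 : x1*y1+x2*y2 <> 0 -> ex_derive jf (sf x1 x2 y1 y2) ->
  ex_derive (fun t => Ey2 x1 x2 t y2) y1.
Proof. intros Hu Hj. prep x1 x2 y1 y2 Hu.
  unfold Ey2, Ax1, Ax2, Ay1, Ay2, sx1, sx2, sy1, sy2, Af, eef, sf, qf in *. auto_derive; side. Qed.

Lemma ex_Ey2_2 x1 x2 y1 y2 : x1*y1+x2*y2 <> 0 -> ex_derive jf (sf x1 x2 y1 y2) ->
  ex_derive (fun t => Ey2 x1 x2 y1 t) y2.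
Proof. intros Hu Hj. prep x1 x2 y1 y2 Hu.
  unfold Ey2, Ax1, Ax2, Ay1, Ay2, sx1, sx2, sy1, sy2, Af, eef, sf, qf in *. auto_derive; side. Qed.

Lemma zero_Ey1_1 x1 x2 y1 y2 : x1*y1+x2*y2 <> 0 -> ex_derive jf (sf x1 x2 y1 y2) ->
  Ph (sf x1 x2 y1 y2) = 0 ->
  Derive (fun t => Ey1 x1 x2 t y2) y1 = (b * jf (sf x1 x2 y1 y2) * sy1 x1 x2 y1 y2) *
     (2 * Af x1 x2 y1 y2 * b * jf (sf x1 x2 y1 y2) * sy1 x1 x2 y1 y2).
Proof. intros Hu Hj H0. prep x1 x2 y1 y2 Hu.
  apply is_derive_unique.
  evar (l : R). assert (Hl : is_derive (fun t => Ey1 x1 x2 t y2) y1 l).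
  { unfold l, Ey1, Ax1, Ax2, Ay1, Ay2, sx1, sx2, sy1, sy2, Af, eef, sf, qf in *. auto_derive; [side| reflexivity]. }
  unfold l in Hl. replace (_ * _) with l; [exact Hl|]. unfold l.
  rewrite ?Rmult_1_r; rewrite ?DPh by assumption.
  unfold Ey1, Ey2, Ay1, Ay2, Af, sy1, sy2, eef, sf, qf in *.
  set (R := sqrt (x1*x1+x2*x2)) in *.
  set (Y := sqrt (y1*y1+y2*y2)) in *.
  set (e := exp _) in *.
  assert (R <> 0) by (unfold R; apply Rgt_not_eq, sqrt_lt_R0; auto).
  assert (Y <> 0) by (unfold Y; apply Rgt_not_eq, sqrt_lt_R0; auto).
  unfold Rminus, Rdiv in *. rewrite ?H0. field. repeat split; auto; lra.
Qed.

Lemma zero_Ey1_2 x1 x2 y1 y2 : x1*y1+x2*y2 <> 0 -> ex_derive jf (sf x1 x2 y1 y2) ->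
  Ph (sf x1 x2 y1 y2) = 0 ->
  Derive (fun t => Ey1 x1 x2 y1 t) y2 = (b * jf (sf x1 x2 y1 y2) * sy2 x1 x2 y1 y2) *
     (2 * Af x1 x2 y1 y2 * b * jf (sf x1 x2 y1 y2) * sy1 x1 x2 y1 y2).
Proof. intros Hu Hj H0. prep x1 x2 y1 y2 Hu.
  apply is_derive_unique.
  evar (l : R). assert (Hl : is_derive (fun t => Ey1 x1 x2 y1 t) y2 l).
  { unfold l, Ey1, Ax1, Ax2, Ay1, Ay2, sx1, sx2, sy1, sy2, Af, eef, sf, qf in *. auto_derive; [side| reflexivity]. }
  unfold l in Hl. replace (_ * _) with l; [exact Hl|]. unfold l.
  rewrite ?Rmult_1_r; rewrite ?DPh by assumption.
  unfold Ey1, Ey2, Ay1, Ay2, Af, sy1, sy2, eef, sf, qf in *.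
  set (R := sqrt (x1*x1+x2*x2)) in *.
  set (Y := sqrt (y1*y1+y2*y2)) in *.
  set (e := exp _) in *.
  assert (R <> 0) by (unfold R; apply Rgt_not_eq, sqrt_lt_R0; auto).
  assert (Y <> 0) by (unfold Y; apply Rgt_not_eq, sqrt_lt_R0; auto).
  unfold Rminus, Rdiv in *. rewrite ?H0. field. repeat split; auto; lra.
Qed.

Lemma zero_Ey2_1 x1 x2 y1 y2 : x1*y1+x2*y2 <> 0 -> ex_derive jf (sf x1 x2 y1 y2) ->
  Ph (sf x1 x2 y1 y2) = 0 ->
  Derive (fun t => Ey2 x1 x2 t y2) y1 = (b * jf (sf x1 x2 y1 y2) * sy1 x1 x2 y1 y2) *
     (2 * Af x1 x2 y1 y2 * b * jf (sf x1 x2 y1 y2) * sy2 x1 x2 y1 y2).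
Proof. intros Hu Hj H0. prep x1 x2 y1 y2 Hu.
  apply is_derive_unique.
  evar (l : R). assert (Hl : is_derive (fun t => Ey2 x1 x2 t y2) y1 l).
  { unfold l, Ey2, Ax1, Ax2, Ay1, Ay2, sx1, sx2, sy1, sy2, Af, eef, sf, qf in *. auto_derive; [side| reflexivity]. }
  unfold l in Hl. replace (_ * _) with l; [exact Hl|]. unfold l.
  rewrite ?Rmult_1_r; rewrite ?DPh by assumption.
  unfold Ey1, Ey2, Ay1, Ay2, Af, sy1, sy2, eef, sf, qf in *.
  set (R := sqrt (x1*x1+x2*x2)) in *.
  set (Y := sqrt (y1*y1+y2*y2)) in *.
  set (e := exp _) in *.
  assert (R <> 0) by (unfold R; apply Rgt_not_eq, sqrt_lt_R0; auto).
  assert (Y <> 0) by (unfold Y; apply Rgt_not_eq, sqrt_lt_R0; auto).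
  unfold Rminus, Rdiv in *. rewrite ?H0. field. repeat split; auto; lra.
Qed.

Lemma zero_Ey2_2 x1 x2 y1 y2 : x1*y1+x2*y2 <> 0 -> ex_derive jf (sf x1 x2 y1 y2) ->
  Ph (sf x1 x2 y1 y2) = 0 ->
  Derive (fun t => Ey2 x1 x2 y1 t) y2 = (b * jf (sf x1 x2 y1 y2) * sy2 x1 x2 y1 y2) *
     (2 * Af x1 x2 y1 y2 * b * jf (sf x1 x2 y1 y2) * sy2 x1 x2 y1 y2).
Proof. intros Hu Hj H0. prep x1 x2 y1 y2 Hu.
  apply is_derive_unique.
  evar (l : R). assert (Hl : is_derive (fun t => Ey2 x1 x2 y1 t) y2 l).
  { unfold l, Ey2, Ax1, Ax2, Ay1, Ay2, sx1, sx2, sy1, sy2, Af, eef, sf, qf in *. auto_derive; [side| reflexivity]. }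
  unfold l in Hl. replace (_ * _) with l; [exact Hl|]. unfold l.
  rewrite ?Rmult_1_r; rewrite ?DPh by assumption.
  unfold Ey1, Ey2, Ay1, Ay2, Af, sy1, sy2, eef, sf, qf in *.
  set (R := sqrt (x1*x1+x2*x2)) in *.
  set (Y := sqrt (y1*y1+y2*y2)) in *.
  set (e := exp _) in *.
  assert (R <> 0) by (unfold R; apply Rgt_not_eq, sqrt_lt_R0; auto).
  assert (Y <> 0) by (unfold Y; apply Rgt_not_eq, sqrt_lt_R0; auto).
  unfold Rminus, Rdiv in *. rewrite ?H0. field. repeat split; auto; lra.
Qed.

Lemma Af_nz x1 x2 y1 y2 : x1*y1+x2*y2 <> 0 -> Af x1 x2 y1 y2 <> 0.
Proof.
  intros Hu. pose proof (qpos_x _ _ _ _ Hu). unfold Af, qf.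
  apply Rmult_integral_contrapositive_currified; [|apply Rinv_neq_0_compat; lra].
  apply Rmult_integral_contrapositive_currified; apply pow_nonzero; auto.
  unfold eef. apply Rgt_not_eq, exp_pos.
Qed.

Lemma sf_w0 x1 x2 y1 y2 : x2*y1 - x1*y2 = 0 -> sf x1 x2 y1 y2 = 0.
Proof. intros H. unfold sf. rewrite H. unfold Rdiv. ring. Qed.

Lemma dsf1 x1 x2 y1 y2 : x1*y1+x2*y2 <> 0 ->
  is_derive (fun t => sf x1 x2 t y2) y1 (sy1 x1 x2 y1 y2).
Proof. intros Hu. prep x1 x2 y1 y2 Hu. unfold sf, qf in *.
  auto_derive; [side | fin x1 x2 y1 y2]. Qed.
Lemma dsf2 x1 x2 y1 y2 : x1*y1+x2*y2 <> 0 ->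
  is_derive (fun t => sf x1 x2 y1 t) y2 (sy2 x1 x2 y1 y2).
Proof. intros Hu. prep x1 x2 y1 y2 Hu. unfold sf, qf in *.
  auto_derive; [side | fin x1 x2 y1 y2]. Qed.

Lemma sy1_w0 x1 x2 y1 y2 : x1*y1+x2*y2 <> 0 -> x2*y1 - x1*y2 = 0 -> x2 <> 0 -> sy1 x1 x2 y1 y2 <> 0.
Proof. intros Hu Hw Hx. prep x1 x2 y1 y2 Hu. unfold sy1. rewrite Hw.
  unfold qf in *. replace (b * 0 * y1) with 0 by ring. unfold Rdiv. rewrite Rmult_0_l, Rminus_0_r.
  repeat apply Rmult_integral_contrapositive_currified; try lra.
  apply Rinv_neq_0_compat. repeat apply Rmult_integral_contrapositive_currified; apply Rgt_not_eq, sqrt_lt_R0; auto.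
Qed.
Lemma sy2_w0 x1 x2 y1 y2 : x1*y1+x2*y2 <> 0 -> x2*y1 - x1*y2 = 0 -> x1 <> 0 -> sy2 x1 x2 y1 y2 <> 0.
Proof. intros Hu Hw Hx. prep x1 x2 y1 y2 Hu. unfold sy2. rewrite Hw.
  unfold qf in *. replace (b * 0 * y2) with 0 by ring. unfold Rdiv. rewrite Rmult_0_l, Rminus_0_r.
  repeat apply Rmult_integral_contrapositive_currified; try lra.
  apply Rinv_neq_0_compat. repeat apply Rmult_integral_contrapositive_currified; apply Rgt_not_eq, sqrt_lt_R0; auto.
Qed.

Lemma cst_Ey2 x1 t : jf 0 = 0 -> Ey2 x1 0 t 0 = 0.
Proof. intros H. unfold Ey2. rewrite (sf_w0 x1 0 t 0) by ring. rewrite H. unfold Ay2. ring. Qed.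
Lemma cst_Ey1 x2 t : jf 0 = 0 -> Ey1 0 x2 0 t = 0.
Proof. intros H. unfold Ey1. rewrite (sf_w0 0 x2 0 t) by ring. rewrite H. unfold Ay1. ring. Qed.

Lemma nd_Ey1_1 (gg : R -> R) (cc : R) x1 x2 y1 y2 : x1*y1+x2*y2 <> 0 -> x2*y1 - x1*y2 = 0 ->
  (forall z, jf z = cc * Rabs z * gg z) -> (forall z, -b < z < b -> ex_derive gg z) ->
  cc <> 0 -> gg 0 <> 0 -> Ph 0 <> 0 -> x2 <> 0 ->
  ~ ex_derive (fun t => Ey1 x1 x2 t y2) y1.
Proof.
  intros Hu Hw Hjk Hgg Hc Hg0 HP0 Hx. intros Hex.
  set (a := fun t => Ph (sf x1 x2 t y2) * (Ay1 x1 x2 t y2 * Ph (sf x1 x2 t y2))).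
  set (B := fun t => Ph (sf x1 x2 t y2) * (2 * Af x1 x2 t y2 * b * cc * gg (sf x1 x2 t y2) * sy1 x1 x2 t y2)).
  set (sg := fun t => sf x1 x2 t y2).
  prep x1 x2 y1 y2 Hu.
  assert (Ha : ex_derive a y1).
  { unfold a, Ay1, Ay2, Af, eef, sf, qf in *. auto_derive; side. }
  assert (HB : ex_derive B y1).
  { unfold B, sy1, sy2, Af, eef, sf, qf in *. auto_derive; side; apply Hgg; assumption. }
  apply (kink a B sg y1 (Derive a y1) (Derive B y1) (sy1 x1 x2 y1 y2)).
  - apply Derive_correct; auto.
  - apply Derive_correct; auto.
  - unfold sg. apply dsf1; auto.
  - unfold sg. apply sf_w0; auto.
  - apply sy1_w0; auto.
  - unfold B. rewrite sf_w0 by auto.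
    apply Rmult_integral_contrapositive_currified; [auto|].
    apply Rmult_integral_contrapositive_currified; [|apply sy1_w0; auto].
    apply Rmult_integral_contrapositive_currified; [|auto].
    apply Rmult_integral_contrapositive_currified; [|auto].
    apply Rmult_integral_contrapositive_currified; [|lra].
    apply Rmult_integral_contrapositive_currified; [lra|apply Af_nz; auto].
  - destruct Hex as [d Hd]. exists d. apply (is_derive_ext (fun t => Ey1 x1 x2 t y2)); auto.
    intros t. unfold a, B, sg, Ey1. cbv beta. rewrite Hjk.
    match goal with |- ?x = ?y => change (@eq R x y) end. ring.
Qed.

Lemma nd_Ey2_1 (gg : R -> R) (cc : R) x1 x2 y1 y2 : x1*y1+x2*y2 <> 0 -> x2*y1 - x1*y2 = 0 ->
  (forall z, jf z = cc * Rabs z * gg z) -> (forall z, -b < z < b -> ex_derive gg z) ->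
  cc <> 0 -> gg 0 <> 0 -> Ph 0 <> 0 -> x1 <> 0 -> x2 <> 0 ->
  ~ ex_derive (fun t => Ey2 x1 x2 t y2) y1.
Proof.
  intros Hu Hw Hjk Hgg Hc Hg0 HP0 Hx Hx'. intros Hex.
  set (a := fun t => Ph (sf x1 x2 t y2) * (Ay2 x1 x2 t y2 * Ph (sf x1 x2 t y2))).
  set (B := fun t => Ph (sf x1 x2 t y2) * (2 * Af x1 x2 t y2 * b * cc * gg (sf x1 x2 t y2) * sy2 x1 x2 t y2)).
  set (sg := fun t => sf x1 x2 t y2).
  prep x1 x2 y1 y2 Hu.
  assert (Ha : ex_derive a y1).
  { unfold a, Ay1, Ay2, Af, eef, sf, qf in *. auto_derive; side. }
  assert (HB : ex_derive B y1).
  { unfold B, sy1, sy2, Af, eef, sf, qf in *. auto_derive; side; apply Hgg; assumption. }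
  apply (kink a B sg y1 (Derive a y1) (Derive B y1) (sy1 x1 x2 y1 y2)).
  - apply Derive_correct; auto.
  - apply Derive_correct; auto.
  - unfold sg. apply dsf1; auto.
  - unfold sg. apply sf_w0; auto.
  - apply sy1_w0; auto.
  - unfold B. rewrite sf_w0 by auto.
    apply Rmult_integral_contrapositive_currified; [auto|].
    apply Rmult_integral_contrapositive_currified; [|apply sy2_w0; auto].
    apply Rmult_integral_contrapositive_currified; [|auto].
    apply Rmult_integral_contrapositive_currified; [|auto].
    apply Rmult_integral_contrapositive_currified; [|lra].
    apply Rmult_integral_contrapositive_currified; [lra|apply Af_nz; auto].
  - destruct Hex as [d Hd]. exists d. apply (is_derive_ext (fun t => Ey2 x1 x2 t y2)); auto.
    intros t. unfold a, B, sg, Ey2. cbv beta. rewrite Hjk.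
    match goal with |- ?x = ?y => change (@eq R x y) end. ring.
Qed.

Lemma nd_Ey2_2 (gg : R -> R) (cc : R) x1 x2 y1 y2 : x1*y1+x2*y2 <> 0 -> x2*y1 - x1*y2 = 0 ->
  (forall z, jf z = cc * Rabs z * gg z) -> (forall z, -b < z < b -> ex_derive gg z) ->
  cc <> 0 -> gg 0 <> 0 -> Ph 0 <> 0 -> x1 <> 0 ->
  ~ ex_derive (fun t => Ey2 x1 x2 y1 t) y2.
Proof.
  intros Hu Hw Hjk Hgg Hc Hg0 HP0 Hx. intros Hex.
  set (a := fun t => Ph (sf x1 x2 y1 t) * (Ay2 x1 x2 y1 t * Ph (sf x1 x2 y1 t))).
  set (B := fun t => Ph (sf x1 x2 y1 t) * (2 * Af x1 x2 y1 t * b * cc * gg (sf x1 x2 y1 t) * sy2 x1 x2 y1 t)).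
  set (sg := fun t => sf x1 x2 y1 t).
  prep x1 x2 y1 y2 Hu.
  assert (Ha : ex_derive a y2).
  { unfold a, Ay1, Ay2, Af, eef, sf, qf in *. auto_derive; side. }
  assert (HB : ex_derive B y2).
  { unfold B, sy1, sy2, Af, eef, sf, qf in *. auto_derive; side; apply Hgg; assumption. }
  apply (kink a B sg y2 (Derive a y2) (Derive B y2) (sy2 x1 x2 y1 y2)).
  - apply Derive_correct; auto.
  - apply Derive_correct; auto.
  - unfold sg. apply dsf2; auto.
  - unfold sg. apply sf_w0; auto.
  - apply sy2_w0; auto.
  - unfold B. rewrite sf_w0 by auto.
    apply Rmult_integral_contrapositive_currified; [auto|].
    apply Rmult_integral_contrapositive_currified; [|apply sy2_w0; auto].
    apply Rmult_integral_contrapositive_currified; [|auto].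
    apply Rmult_integral_contrapositive_currified; [|auto].
    apply Rmult_integral_contrapositive_currified; [|lra].
    apply Rmult_integral_contrapositive_currified; [lra|apply Af_nz; auto].
  - destruct Hex as [d Hd]. exists d. apply (is_derive_ext (fun t => Ey2 x1 x2 y1 t)); auto.
    intros t. unfold a, B, sg, Ey2. cbv beta. rewrite Hjk.
    match goal with |- ?x = ?y => change (@eq R x y) end. ring.
Qed.

End CoreS.

Definition jfC (b c : R) (m : nat) (t : R) : R :=
  c * Rabs t ^ (2 * m - 1) / Rpower (b ^ 2 - t ^ 2) (3 / 2).
Definition PhC b c m s := 1 + b * Defs.RInt (jfC b c m) 0 s.
Definition hhC b c m s := s * jfC b c m s.

Lemma exd_cont (f : R -> R) x : ex_derive f x -> continuous f x.
Proof. exact (ex_derive_continuous f x). Qed.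

Lemma jfC_cont b c m z : -b < z < b -> continuous (jfC b c m) z.
Proof.
  intros Hz. unfold jfC, Rpower, Rdiv.
  assert (Hp : 0 < b^2 - z^2) by nra.
  apply (continuous_mult (fun t => c * Rabs t ^ (2*m-1)) (fun t => / exp (3/2 * ln (b^2 - t^2)))).
  - apply (continuous_comp Rabs (fun y => c * y ^ (2*m-1))).
    + apply continuous_Rabs.
    + apply exd_cont. auto_derive. auto.
  - apply exd_cont. auto_derive. repeat split; try nra.
    apply Rgt_not_eq, exp_pos.
Qed.

Lemma jfC_exRInt b c m z : -b < z < b -> ex_RInt (jfC b c m) 0 z.
Proof.
  intros Hz. apply (ex_RInt_continuous (V:=R_CompleteNormedModule)). intros t Ht. apply jfC_cont.
  revert Ht. apply Rmin_case_strong; apply Rmax_case_strong; intros; lra.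
Qed.

Lemma RInt_same b c m z : -b < z < b -> Defs.RInt (jfC b c m) 0 z = RInt (jfC b c m) 0 z.
Proof.
  intros Hz. unfold Defs.RInt.
  destruct excluded_middle_informative as [e|n].
  - symmetry. apply RInt_Reals.
  - exfalso. apply n. exists (ex_RInt_Reals_0 _ _ _ (jfC_exRInt b c m z Hz)). auto.
Qed.

Section Aff.
Variable f : R -> R.
Lemma is_derive_aff (b z d : R) : is_derive f z d -> is_derive (fun s => 1 + b * f s) z (b * d).
Proof. intros H. auto_derive.
  - exists d; auto.
  - replace (Derive (fun x => f x) z) with d by (symmetry; apply is_derive_unique; auto). ring.
Qed.
End Aff.

Lemma PhC_der b c m z : 0 < b -> -b < z < b -> is_derive (PhC b c m) z (b * jfC b c m z).
Proof.
  intros hb Hz.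
  assert (HI : is_derive (fun s => RInt (jfC b c m) 0 s) z (jfC b c m z)).
  { apply (is_derive_RInt (jfC b c m) (fun s => RInt (jfC b c m) 0 s) 0 z).
    - set (e := Rmin (z + b) (b - z)).
      assert (ep : 0 < e) by (unfold e; apply Rmin_case; lra).
      exists (mkposreal e ep). intros t Ht. simpl in Ht.
      unfold ball in Ht; simpl in Ht. unfold AbsRing_ball, abs, minus, plus, opp in Ht; simpl in Ht.
      apply (RInt_correct (V:=R_CompleteNormedModule)). apply jfC_exRInt.
      apply Rabs_def2 in Ht. pose proof (Rmin_l (z+b) (b-z)). pose proof (Rmin_r (z+b) (b-z)).
      fold e in H, H0. lra.
    - apply jfC_cont; auto. }
  apply (is_derive_ext_loc (fun s => 1 + b * RInt (jfC b c m) 0 s)).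
  - set (e := Rmin (z + b) (b - z)).
    assert (ep : 0 < e) by (unfold e; apply Rmin_case; lra).
    exists (mkposreal e ep). intros t Ht. simpl in Ht.
    unfold ball in Ht; simpl in Ht. unfold AbsRing_ball, abs, minus, plus, opp in Ht; simpl in Ht.
    unfold PhC. rewrite RInt_same; auto.
    apply Rabs_def2 in Ht. pose proof (Rmin_l (z+b) (b-z)). pose proof (Rmin_r (z+b) (b-z)).
    fold e in H, H0. lra.
  - apply (is_derive_aff (fun s => RInt (jfC b c m) 0 s)). exact HI.
Qed.

Lemma loc_ball (z e : R) (P : R -> Prop) : 0 < e -> (forall t, Rabs (t - z) < e -> P t) -> locally z P.
Proof. intros He H. exists (mkposreal e He). intros t Ht. apply H. exact Ht. Qed.

Lemma tabs_der n z : (1 <= n)%nat -> is_derive (fun t => t * Rabs t ^ n) z (INR (S n) * Rabs z ^ n).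
Proof.
  intros Hn. destruct (Rtotal_order z 0) as [Hz|[Hz|Hz]].
  - apply (is_derive_ext_loc (fun t => - ((- t) ^ (S n)))).
    + apply (loc_ball z (-z)); [lra|]. intros t Ht. apply Rabs_def2 in Ht.
      rewrite Rabs_left by lra. simpl. ring.
    + rewrite Rabs_left by lra.
      auto_derive; auto. simpl pred. change (match n with 0%nat => 1 | S _ => INR n + 1 end) with (INR (S n)). ring.
  - subst z. apply is_derive_Reals. intros eps He.
    exists (mkposreal (Rmin 1 eps) ltac:(apply Rmin_case; lra)). intros h Hh Hlt. simpl in Hlt.
    rewrite Rabs_R0, pow_i by lia.
    replace (((0 + h) * Rabs (0 + h) ^ n - 0 * 0) / h - INR (S n) * 0) with (Rabs h ^ n)
      by (rewrite Rplus_0_l; field; auto).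
    rewrite (Rabs_right (Rabs h ^ n)) by (apply Rle_ge, pow_le, Rabs_pos).
    assert (Rabs h < 1) by (pose proof (Rmin_l 1 eps); lra).
    assert (Rabs h < eps) by (pose proof (Rmin_r 1 eps); lra).
    apply Rle_lt_trans with (Rabs h); auto.
    destruct n; [lia|]. simpl. apply Rle_trans with (Rabs h * 1); [|lra].
    apply Rmult_le_compat_l; [apply Rabs_pos|]. rewrite <- (pow1 n). apply pow_incr. split; [apply Rabs_pos|lra].
  - apply (is_derive_ext_loc (fun t => t ^ (S n))).
    + apply (loc_ball z z); [lra|]. intros t Ht. apply Rabs_def2 in Ht.
      rewrite Rabs_right by lra. simpl. ring.
    + rewrite Rabs_right by lra.
      auto_derive; auto. simpl pred. change (match n with 0%nat => 1 | S _ => INR n + 1 end) with (INR (S n)). ring.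
Qed.

Section GenDer.
Variable g : R -> R.
Lemma gen_der (b c z dg : R) : 0 < b^2 - z^2 -> is_derive g z dg ->
  is_derive (fun t => c * g t / exp (3/2 * ln (b^2 - t^2))) z
    ((c * dg + c * g z * 3 * z / (b^2 - z^2)) / exp (3/2 * ln (b^2 - z^2))).
Proof.
  intros Hp H. auto_derive.
  - repeat split; try (exists dg; auto); try nra. apply Rgt_not_eq, exp_pos.
  - replace (Derive (fun x => g x) z) with dg by (symmetry; apply is_derive_unique; auto).
    rewrite ?Rmult_1_r. replace (b*b + -(z*z)) with (b^2 - z^2) by ring. field. split; first [apply Rgt_not_eq; apply exp_pos | nra].
Qed.
End GenDer.

Lemma hhC_der b c m z : 0 < b -> (1 <= m)%nat -> -b < z < b ->
  is_derive (hhC b c m) z (jfC b c m z * (2 * INR m + 3 * z^2 / (b^2 - z^2))).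
Proof.
  intros hb hm Hz. assert (Hp : 0 < b^2 - z^2) by nra.
  apply (is_derive_ext (fun t => c * (t * Rabs t ^ (2*m-1)) / exp (3/2 * ln (b^2 - t^2)))).
  { intros t. cbv beta. unfold hhC, jfC, Rpower. unfold Rdiv. match goal with |- ?a = ?b => change (@eq R a b) end. ring. }
  evar (l : R). replace (jfC b c m z * _) with l.
  - apply (gen_der (fun t => t * Rabs t ^ (2*m-1))); auto. apply tabs_der. lia.
  - unfold l, jfC, Rpower. replace (S (2*m-1)) with (2*m)%nat by lia. rewrite mult_INR.
    simpl INR. field. split; first [apply Rgt_not_eq; apply exp_pos | nra].
Qed.

Lemma absn_ex n z : (z <> 0 \/ (2 <= n)%nat) -> ex_derive (fun t => Rabs t ^ n) z.
Proof.
  intros H. destruct (Rtotal_order z 0) as [Hz|[Hz|Hz]].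
  - exists (INR n * (-1) * (-z)^(pred n)).
    apply (is_derive_ext_loc (fun t => (- t) ^ n)).
    + apply (loc_ball z (-z)); [lra|]. intros t Ht. apply Rabs_def2 in Ht.
      rewrite Rabs_left by lra. reflexivity.
    + auto_derive; auto. ring.
  - subst z. destruct H as [H|H]; [lra|]. exists 0.
    apply is_derive_Reals. intros eps He.
    exists (mkposreal (Rmin 1 eps) ltac:(apply Rmin_case; lra)). intros h Hh Hlt. simpl in Hlt.
    rewrite Rabs_R0, pow_i by lia. rewrite Rplus_0_l.
    replace ((Rabs h ^ n - 0) / h - 0) with (Rabs h ^ n / h) by (field; auto).
    assert (Rabs h < 1) by (pose proof (Rmin_l 1 eps); lra).
    assert (Rabs h < eps) by (pose proof (Rmin_r 1 eps); lra).
    unfold Rdiv. rewrite Rabs_mult, Rabs_inv.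
    rewrite (Rabs_right (Rabs h ^ n)) by (apply Rle_ge, pow_le, Rabs_pos).
    destruct n as [|[|n]]; try lia. simpl.
    assert (0 < Rabs h) by (apply Rabs_pos_lt; auto).
    replace (Rabs h * (Rabs h * Rabs h ^ n) * / Rabs h) with (Rabs h * Rabs h ^ n) by (field; lra).
    apply Rle_lt_trans with (Rabs h * 1); [|lra].
    apply Rmult_le_compat_l; [apply Rabs_pos|].
    rewrite <- (pow1 n). apply pow_incr. split; [apply Rabs_pos|lra].
  - exists (INR n * z^(pred n)).
    apply (is_derive_ext_loc (fun t => t ^ n)).
    + apply (loc_ball z z); [lra|]. intros t Ht. apply Rabs_def2 in Ht.
      rewrite Rabs_right by lra. reflexivity.
    + auto_derive; auto. ring.
Qed.

Lemma jfC_ex b c m z : 0 < b -> (1 <= m)%nat -> -b < z < b -> ((2 <= m)%nat \/ c = 0 \/ z <> 0) ->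
  ex_derive (jfC b c m) z.
Proof.
  intros hb hm Hz H. assert (Hp : 0 < b^2 - z^2) by nra.
  destruct H as [H|[H|H]].
  - assert (H2 : (2 <= 2*m-1)%nat) by lia. destruct (absn_ex (2*m-1) z (or_intror H2)) as [dg Hdg].
    eexists. apply (is_derive_ext (fun t => c * Rabs t ^ (2*m-1) / exp (3/2 * ln (b^2 - t^2)))).
    { intros t. reflexivity. }
    apply (gen_der (fun t => Rabs t ^ (2*m-1))); eauto.
  - subst c. exists 0. apply (is_derive_ext (fun t => 0)).
    { intros t. unfold jfC. cbv beta. match goal with |- ?a = ?b => change (@eq R a b) end.
      unfold Rdiv. ring. }
    auto_derive; auto.
  - destruct (absn_ex (2*m-1) z (or_introl H)) as [dg Hdg].
    eexists. apply (is_derive_ext (fun t => c * Rabs t ^ (2*m-1) / exp (3/2 * ln (b^2 - t^2)))).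
    { intros t. reflexivity. }
    apply (gen_der (fun t => Rabs t ^ (2*m-1))); eauto.
Qed.

Section Lin.
Variables f g : R -> R.
Lemma lin_a t0 a : ex_derive f t0 -> ex_derive g t0 ->
  is_derive (fun t => t * f t + a * g t) t0 (f t0 + t0 * Derive f t0 + a * Derive g t0).
Proof. intros Hf Hg. auto_derive; auto. change (Derive (fun x => f x) t0) with (Derive f t0).
  change (Derive (fun x => g x) t0) with (Derive g t0). ring. Qed.
Lemma lin_b t0 a : ex_derive f t0 -> ex_derive g t0 ->
  is_derive (fun t => a * f t + t * g t) t0 (a * Derive f t0 + g t0 + t0 * Derive g t0).
Proof. intros Hf Hg. auto_derive; auto. change (Derive (fun x => f x) t0) with (Derive f t0).
  change (Derive (fun x => g x) t0) with (Derive g t0). ring. Qed.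
Lemma scal2 t0 d : is_derive f t0 d -> is_derive (fun t => 2 * f t) t0 (2 * d).
Proof. intros Hf. auto_derive. exists d; auto.
  replace (Derive (fun x => f x) t0) with d by (symmetry; apply is_derive_unique; auto). ring. Qed.
End Lin.

Section Main.
Variables (b c : R) (m : nat).
Hypothesis hb : 0 < b.
Hypothesis hm : (1 <= m)%nat.

Lemma Fsq_eq x1 x2 y1 y2 : x1*y1+x2*y2 <> 0 ->
  Fsq (Fmetric b c m) (x1,x2) (y1,y2) = Ef (PhC b c m) b (INR m) x1 x2 y1 y2.
Proof.
  intros Hu. pose proof (qpos_x _ _ _ _ Hu) as Hq. pose proof (qpos_y _ _ _ _ Hu) as Hy.
  pose proof (sbound b hb _ _ _ _ Hu) as Hs.
  unfold Fsq, Fmetric, alpha, beta, phi, Defs.sigma. simpl fst; simpl snd.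
  replace (x1^2+x2^2) with (x1*x1+x2*x2) by ring.
  replace (y1^2+y2^2) with (y1*y1+y2*y2) by ring.
  set (e := exp ((INR m - 1) * ln (x1*x1+x2*x2))).
  assert (He : 0 < e) by apply exp_pos.
  set (R := sqrt (x1*x1+x2*x2)). set (Y := sqrt (y1*y1+y2*y2)).
  assert (HR : R^2 = x1*x1+x2*x2) by (unfold R; rewrite <- Rsqr_pow2, Rsqr_sqrt; lra).
  assert (HY : Y^2 = y1*y1+y2*y2) by (unfold Y; rewrite <- Rsqr_pow2, Rsqr_sqrt; lra).
  assert (R <> 0) by (unfold R; apply Rgt_not_eq, sqrt_lt_R0; auto).
  assert (Y <> 0) by (unfold Y; apply Rgt_not_eq, sqrt_lt_R0; auto).
  assert (Hba : b * e * (x2 * y1 - x1 * y2) / R / (e * Y) = sf b x1 x2 y1 y2).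
  { unfold sf, qf. fold R Y. field. repeat split; auto; lra. }
  rewrite Hba.
  set (s := sf b x1 x2 y1 y2) in *.
  set (SQ := sqrt (b^2 - s^2)).
  assert (HSQ : SQ^2 = b^2 - s^2) by (unfold SQ; rewrite <- Rsqr_pow2, Rsqr_sqrt; nra).
  unfold Ef, Af, PhC, eef, qf. fold s. fold R Y e.
  set (I := Defs.RInt (jfC b c m) 0 s).
  unfold s, sf, qf in HSQ. fold R Y in HSQ.
  change (fun t => c * Rabs t ^ (2 * m - 1) / Rpower (b ^ 2 - t ^ 2) (3 / 2)) with (jfC b c m).
  fold I.
  replace ((e * Y * (SQ / b + SQ * I)) ^ 2) with (e^2*Y^2*SQ^2*(1+b*I)^2/b^2) by (field; lra).
  rewrite HSQ. field [HR HY]. repeat split; auto; lra.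
Qed.
Let PH := PhC b c m.
Let JF := jfC b c m.
Let HH := hhC b c m.
Let MM := INR m.
Let FF := Fsq (Fmetric b c m).

Lemma HPhC : forall z, -b < z < b -> is_derive PH z (b * JF z).
Proof. intros z Hz. apply PhC_der; auto. Qed.
Lemma HhhC : forall z, -b < z < b -> is_derive HH z (JF z * (2*MM + 3*z^2/(b^2-z^2))).
Proof. intros z Hz. apply hhC_der; auto. Qed.
Lemma HhhdC : forall z, HH z = z * JF z.
Proof. reflexivity. Qed.

Lemma loc_u a c0 t0 (P : R -> Prop) : a*t0 + c0 <> 0 -> (forall t, a*t + c0 <> 0 -> P t) -> locally t0 P.
Proof. intros H H'. eapply filter_imp; [|apply (loc_lin a c0 t0 H)]. exact H'. Qed.


Lemma Dx1_pt x1 x2 y1 y2 : x1*y1+x2*y2 <> 0 ->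
  Defs.Dx 1 FF (x1,x2) (y1,y2) = Ex1 PH JF b MM x1 x2 y1 y2.
Proof.
  intros Hu. unfold Defs.Dx. simpl.
  rewrite (deriv1_loc _ (fun t => Ef PH b MM t x2 y1 y2)).
  - apply deriv1_is. apply dEx1; auto. apply HPhC.
  - apply (loc_u y1 (x2*y2)). { intro H; apply Hu; lra. }
    intros t Ht. unfold FF. apply Fsq_eq. lra.
Qed.
Lemma Dx2_pt x1 x2 y1 y2 : x1*y1+x2*y2 <> 0 ->
  Defs.Dx 2 FF (x1,x2) (y1,y2) = Ex2 PH JF b MM x1 x2 y1 y2.
Proof.
  intros Hu. unfold Defs.Dx. simpl.
  rewrite (deriv1_loc _ (fun t => Ef PH b MM x1 t y1 y2)).
  - apply deriv1_is. apply dEx2; auto. apply HPhC.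
  - apply (loc_u y2 (x1*y1)). { intro H; apply Hu; lra. }
    intros t Ht. unfold FF. apply Fsq_eq. lra.
Qed.
Lemma Dy1_pt x1 x2 y1 y2 : x1*y1+x2*y2 <> 0 ->
  Defs.Dy 1 FF (x1,x2) (y1,y2) = Ey1 PH JF b MM x1 x2 y1 y2.
Proof.
  intros Hu. unfold Defs.Dy. simpl.
  rewrite (deriv1_loc _ (fun t => Ef PH b MM x1 x2 t y2)).
  - apply deriv1_is. apply dEy1; auto. apply HPhC.
  - apply (loc_u x1 (x2*y2)). { intro H; apply Hu; lra. }
    intros t Ht. unfold FF. apply Fsq_eq. lra.
Qed.
Lemma Dy2_pt x1 x2 y1 y2 : x1*y1+x2*y2 <> 0 ->
  Defs.Dy 2 FF (x1,x2) (y1,y2) = Ey2 PH JF b MM x1 x2 y1 y2.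
Proof.
  intros Hu. unfold Defs.Dy. simpl.
  rewrite (deriv1_loc _ (fun t => Ef PH b MM x1 x2 y1 t)).
  - apply deriv1_is. apply dEy2; auto. apply HPhC.
  - apply (loc_u x2 (x1*y1)). { intro H; apply Hu; lra. }
    intros t Ht. unfold FF. apply Fsq_eq. lra.
Qed.

Lemma N1_Dx1 x1 x2 y1 y2 : x1*y1+x2*y2 <> 0 ->
  Defs.Dy 1 (Defs.Dx 1 FF) (x1,x2) (y1,y2) = deriv1 (fun t => Ex1 PH JF b MM x1 x2 t y2) y1.
Proof.
  intros Hu. unfold Defs.Dy at 1. simpl.
  apply deriv1_loc. apply (loc_u x1 (x2*y2)). { intro H; apply Hu; lra. }
  intros t Ht. apply Dx1_pt. lra.
Qed.
Lemma N2_Dx1 x1 x2 y1 y2 : x1*y1+x2*y2 <> 0 ->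
  Defs.Dy 2 (Defs.Dx 1 FF) (x1,x2) (y1,y2) = deriv1 (fun t => Ex1 PH JF b MM x1 x2 y1 t) y2.
Proof.
  intros Hu. unfold Defs.Dy at 1. simpl.
  apply deriv1_loc. apply (loc_u x2 (x1*y1)). { intro H; apply Hu; lra. }
  intros t Ht. apply Dx1_pt. lra.
Qed.

Lemma N1_Dx2 x1 x2 y1 y2 : x1*y1+x2*y2 <> 0 ->
  Defs.Dy 1 (Defs.Dx 2 FF) (x1,x2) (y1,y2) = deriv1 (fun t => Ex2 PH JF b MM x1 x2 t y2) y1.
Proof.
  intros Hu. unfold Defs.Dy at 1. simpl.
  apply deriv1_loc. apply (loc_u x1 (x2*y2)). { intro H; apply Hu; lra. }
  intros t Ht. apply Dx2_pt. lra.
Qed.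
Lemma N2_Dx2 x1 x2 y1 y2 : x1*y1+x2*y2 <> 0 ->
  Defs.Dy 2 (Defs.Dx 2 FF) (x1,x2) (y1,y2) = deriv1 (fun t => Ex2 PH JF b MM x1 x2 y1 t) y2.
Proof.
  intros Hu. unfold Defs.Dy at 1. simpl.
  apply deriv1_loc. apply (loc_u x2 (x1*y1)). { intro H; apply Hu; lra. }
  intros t Ht. apply Dx2_pt. lra.
Qed.

Lemma N1_Dy1 x1 x2 y1 y2 : x1*y1+x2*y2 <> 0 ->
  Defs.Dy 1 (Defs.Dy 1 FF) (x1,x2) (y1,y2) = deriv1 (fun t => Ey1 PH JF b MM x1 x2 t y2) y1.
Proof.
  intros Hu. unfold Defs.Dy at 1. simpl.
  apply deriv1_loc. apply (loc_u x1 (x2*y2)). { intro H; apply Hu; lra. }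
  intros t Ht. apply Dy1_pt. lra.
Qed.
Lemma N2_Dy1 x1 x2 y1 y2 : x1*y1+x2*y2 <> 0 ->
  Defs.Dy 2 (Defs.Dy 1 FF) (x1,x2) (y1,y2) = deriv1 (fun t => Ey1 PH JF b MM x1 x2 y1 t) y2.
Proof.
  intros Hu. unfold Defs.Dy at 1. simpl.
  apply deriv1_loc. apply (loc_u x2 (x1*y1)). { intro H; apply Hu; lra. }
  intros t Ht. apply Dy1_pt. lra.
Qed.

Lemma N1_Dy2 x1 x2 y1 y2 : x1*y1+x2*y2 <> 0 ->
  Defs.Dy 1 (Defs.Dy 2 FF) (x1,x2) (y1,y2) = deriv1 (fun t => Ey2 PH JF b MM x1 x2 t y2) y1.
Proof.
  intros Hu. unfold Defs.Dy at 1. simpl.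
  apply deriv1_loc. apply (loc_u x1 (x2*y2)). { intro H; apply Hu; lra. }
  intros t Ht. apply Dy2_pt. lra.
Qed.
Lemma N2_Dy2 x1 x2 y1 y2 : x1*y1+x2*y2 <> 0 ->
  Defs.Dy 2 (Defs.Dy 2 FF) (x1,x2) (y1,y2) = deriv1 (fun t => Ey2 PH JF b MM x1 x2 y1 t) y2.
Proof.
  intros Hu. unfold Defs.Dy at 1. simpl.
  apply deriv1_loc. apply (loc_u x2 (x1*y1)). { intro H; apply Hu; lra. }
  intros t Ht. apply Dy2_pt. lra.
Qed.

Lemma Mrow1 x1 x2 y1 y2 : x1*y1+x2*y2 <> 0 -> ex_derive JF (sf b x1 x2 y1 y2) ->
  y1 * Derive (fun t => Ey1 PH JF b MM x1 x2 t y2) y1 + y2 * Derive (fun t => Ey2 PH JF b MM x1 x2 t y2) y1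
  = Ey1 PH JF b MM x1 x2 y1 y2.
Proof.
  intros Hu Hj.
  pose proof (lin_a (fun t => Ey1 PH JF b MM x1 x2 t y2) (fun t => Ey2 PH JF b MM x1 x2 t y2) y1 y2
    (ex_Ey1_1 _ _ _ _ hb HPhC _ _ _ _ Hu Hj) (ex_Ey2_1 _ _ _ _ hb HPhC _ _ _ _ Hu Hj)) as H1.
  assert (H2 : is_derive (fun t => t * Ey1 PH JF b MM x1 x2 t y2 + y2 * Ey2 PH JF b MM x1 x2 t y2) y1
     (2 * Ey1 PH JF b MM x1 x2 y1 y2)).
  { apply (is_derive_ext_loc (fun t => 2 * Ef PH b MM x1 x2 t y2)).
    - apply (loc_u x1 (x2*y2)). { intro H; apply Hu; lra. }
      intros t Ht. symmetry. apply euler; (exact hb || apply HPhC || apply HhhdC || lra).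
    - apply scal2. apply dEy1; auto. apply HPhC. }
  pose proof (is_derive_unique _ _ _ H1) as E1. pose proof (is_derive_unique _ _ _ H2) as E2.
  rewrite E1 in E2. lra.
Qed.
Lemma Mrow2 x1 x2 y1 y2 : x1*y1+x2*y2 <> 0 -> ex_derive JF (sf b x1 x2 y1 y2) ->
  y1 * Derive (fun t => Ey1 PH JF b MM x1 x2 y1 t) y2 + y2 * Derive (fun t => Ey2 PH JF b MM x1 x2 y1 t) y2
  = Ey2 PH JF b MM x1 x2 y1 y2.
Proof.
  intros Hu Hj.
  pose proof (lin_b (fun t => Ey1 PH JF b MM x1 x2 y1 t) (fun t => Ey2 PH JF b MM x1 x2 y1 t) y2 y1
    (ex_Ey1_2 _ _ _ _ hb HPhC _ _ _ _ Hu Hj) (ex_Ey2_2 _ _ _ _ hb HPhC _ _ _ _ Hu Hj)) as H1.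
  assert (H2 : is_derive (fun t => y1 * Ey1 PH JF b MM x1 x2 y1 t + t * Ey2 PH JF b MM x1 x2 y1 t) y2
     (2 * Ey2 PH JF b MM x1 x2 y1 y2)).
  { apply (is_derive_ext_loc (fun t => 2 * Ef PH b MM x1 x2 y1 t)).
    - apply (loc_u x2 (x1*y1)). { intro H; apply Hu; lra. }
      intros t Ht. symmetry. apply euler; (exact hb || apply HPhC || apply HhhdC || lra).
    - apply scal2. apply dEy2; auto. apply HPhC. }
  pose proof (is_derive_unique _ _ _ H1) as E1. pose proof (is_derive_unique _ _ _ H2) as E2.
  rewrite E1 in E2. lra.
Qed.
Lemma Trow1 x1 x2 y1 y2 : x1*y1+x2*y2 <> 0 -> ex_derive JF (sf b x1 x2 y1 y2) ->
  2 * Ef PH b MM x1 x2 y1 y2 *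
  (y1 * Derive (fun t => Ex1 PH JF b MM x1 x2 t y2) y1 + y2 * Derive (fun t => Ex2 PH JF b MM x1 x2 t y2) y1
   - Ex1 PH JF b MM x1 x2 y1 y2) = DEf PH HH b MM x1 x2 y1 y2 * Ey1 PH JF b MM x1 x2 y1 y2.
Proof.
  intros Hu Hj.
  pose proof (lin_a (fun t => Ex1 PH JF b MM x1 x2 t y2) (fun t => Ex2 PH JF b MM x1 x2 t y2) y1 y2
    (ex_Ex1_1 _ _ _ _ hb HPhC _ _ _ _ Hu Hj) (ex_Ex2_1 _ _ _ _ hb HPhC _ _ _ _ Hu Hj)) as H1.
  destruct (hamel1 PH JF HH b MM hb HPhC HhhC HhhdC _ _ _ _ Hu) as [l [Hl Hid]].
  assert (H2 : is_derive (fun t => t * Ex1 PH JF b MM x1 x2 t y2 + y2 * Ex2 PH JF b MM x1 x2 t y2) y1 l).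
  { apply (is_derive_ext_loc (fun t => DEf PH HH b MM x1 x2 t y2)); auto.
    apply (loc_u x1 (x2*y2)). { intro H; apply Hu; lra. }
    intros t Ht. symmetry. apply DEid; (exact hb || apply HPhC || apply HhhdC || lra). }
  pose proof (is_derive_unique _ _ _ H1) as E1. pose proof (is_derive_unique _ _ _ H2) as E2.
  rewrite E1 in E2. rewrite <- Hid. f_equal. lra.
Qed.
Lemma Trow2 x1 x2 y1 y2 : x1*y1+x2*y2 <> 0 -> ex_derive JF (sf b x1 x2 y1 y2) ->
  2 * Ef PH b MM x1 x2 y1 y2 *
  (y1 * Derive (fun t => Ex1 PH JF b MM x1 x2 y1 t) y2 + y2 * Derive (fun t => Ex2 PH JF b MM x1 x2 y1 t) y2
   - Ex2 PH JF b MM x1 x2 y1 y2) = DEf PH HH b MM x1 x2 y1 y2 * Ey2 PH JF b MM x1 x2 y1 y2.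
Proof.
  intros Hu Hj.
  pose proof (lin_b (fun t => Ex1 PH JF b MM x1 x2 y1 t) (fun t => Ex2 PH JF b MM x1 x2 y1 t) y2 y1
    (ex_Ex1_2 _ _ _ _ hb HPhC _ _ _ _ Hu Hj) (ex_Ex2_2 _ _ _ _ hb HPhC _ _ _ _ Hu Hj)) as H1.
  destruct (hamel2 PH JF HH b MM hb HPhC HhhC HhhdC _ _ _ _ Hu) as [l [Hl Hid]].
  assert (H2 : is_derive (fun t => y1 * Ex1 PH JF b MM x1 x2 y1 t + t * Ex2 PH JF b MM x1 x2 y1 t) y2 l).
  { apply (is_derive_ext_loc (fun t => DEf PH HH b MM x1 x2 y1 t)); auto.
    apply (loc_u x2 (x1*y1)). { intro H; apply Hu; lra. }
    intros t Ht. symmetry. apply DEid; (exact hb || apply HPhC || apply HhhdC || lra). }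
  pose proof (is_derive_unique _ _ _ H1) as E1. pose proof (is_derive_unique _ _ _ H2) as E2.
  rewrite E1 in E2. rewrite <- Hid. f_equal. lra.
Qed.

Lemma Af_pos x1 x2 y1 y2 : x1*y1+x2*y2 <> 0 -> Af MM x1 x2 y1 y2 <> 0.
Proof.
  intros Hu. pose proof (qpos_x _ _ _ _ Hu). unfold Af, qf.
  apply Rmult_integral_contrapositive_currified; [|apply Rinv_neq_0_compat; lra].
  apply Rmult_integral_contrapositive_currified; apply pow_nonzero; auto.
  unfold eef. apply Rgt_not_eq, exp_pos.
Qed.

Lemma G11 x1 x2 y1 y2 : x1*y1+x2*y2 <> 0 -> ex_derive JF (sf b x1 x2 y1 y2) ->
  gmet (Fmetric b c m) 1 1 (x1,x2) (y1,y2) = / 2 * Derive (fun t => Ey1 PH JF b MM x1 x2 t y2) y1.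
Proof.
  intros Hu Hj. unfold gmet. fold FF. rewrite N1_Dy1 by auto. rewrite deriv1_ex; auto.
  apply ex_Ey1_1; auto. apply HPhC.
Qed.

Lemma G12 x1 x2 y1 y2 : x1*y1+x2*y2 <> 0 -> ex_derive JF (sf b x1 x2 y1 y2) ->
  gmet (Fmetric b c m) 1 2 (x1,x2) (y1,y2) = / 2 * Derive (fun t => Ey2 PH JF b MM x1 x2 t y2) y1.
Proof.
  intros Hu Hj. unfold gmet. fold FF. rewrite N1_Dy2 by auto. rewrite deriv1_ex; auto.
  apply ex_Ey2_1; auto. apply HPhC.
Qed.

Lemma S1 x1 x2 y1 y2 : x1*y1+x2*y2 <> 0 -> ex_derive JF (sf b x1 x2 y1 y2) ->
  sprayTerm (Fmetric b c m) 1 (x1,x2) (y1,y2) =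
  Derive (fun t => Ex1 PH JF b MM x1 x2 t y2) y1 * y1 +
  Derive (fun t => Ex2 PH JF b MM x1 x2 t y2) y1 * y2 - Ex1 PH JF b MM x1 x2 y1 y2.
Proof.
  intros Hu Hj. unfold sprayTerm. fold FF. simpl fst; simpl snd.
  rewrite N1_Dx1, N1_Dx2 by auto. rewrite Dx1_pt by auto.
  rewrite !deriv1_ex; auto; [apply ex_Ex2_1 | apply ex_Ex1_1]; auto; apply HPhC.
Qed.

Lemma G21 x1 x2 y1 y2 : x1*y1+x2*y2 <> 0 -> ex_derive JF (sf b x1 x2 y1 y2) ->
  gmet (Fmetric b c m) 2 1 (x1,x2) (y1,y2) = / 2 * Derive (fun t => Ey1 PH JF b MM x1 x2 y1 t) y2.
Proof.
  intros Hu Hj. unfold gmet. fold FF. rewrite N2_Dy1 by auto. rewrite deriv1_ex; auto.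
  apply ex_Ey1_2; auto. apply HPhC.
Qed.

Lemma G22 x1 x2 y1 y2 : x1*y1+x2*y2 <> 0 -> ex_derive JF (sf b x1 x2 y1 y2) ->
  gmet (Fmetric b c m) 2 2 (x1,x2) (y1,y2) = / 2 * Derive (fun t => Ey2 PH JF b MM x1 x2 y1 t) y2.
Proof.
  intros Hu Hj. unfold gmet. fold FF. rewrite N2_Dy2 by auto. rewrite deriv1_ex; auto.
  apply ex_Ey2_2; auto. apply HPhC.
Qed.

Lemma S2 x1 x2 y1 y2 : x1*y1+x2*y2 <> 0 -> ex_derive JF (sf b x1 x2 y1 y2) ->
  sprayTerm (Fmetric b c m) 2 (x1,x2) (y1,y2) =
  Derive (fun t => Ex1 PH JF b MM x1 x2 y1 t) y2 * y1 +
  Derive (fun t => Ex2 PH JF b MM x1 x2 y1 t) y2 * y2 - Ex2 PH JF b MM x1 x2 y1 y2.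
Proof.
  intros Hu Hj. unfold sprayTerm. fold FF. simpl fst; simpl snd.
  rewrite N2_Dx1, N2_Dx2 by auto. rewrite Dx2_pt by auto.
  rewrite !deriv1_ex; auto; [apply ex_Ex2_2 | apply ex_Ex1_2]; auto; apply HPhC.
Qed.

Definition detg (x y : R2) : R :=
  gmet (Fmetric b c m) 1 1 x y * gmet (Fmetric b c m) 2 2 x y
  - gmet (Fmetric b c m) 1 2 x y * gmet (Fmetric b c m) 2 1 x y.

Lemma nondeg x1 x2 y1 y2 : x1*y1+x2*y2 <> 0 -> ex_derive JF (sf b x1 x2 y1 y2) ->
  detg (x1,x2) (y1,y2) <> 0 ->
  spray (Fmetric b c m) 1 (x1,x2) (y1,y2) = DEf PH HH b MM x1 x2 y1 y2 / (4 * Ef PH b MM x1 x2 y1 y2) * y1 /\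
  spray (Fmetric b c m) 2 (x1,x2) (y1,y2) = DEf PH HH b MM x1 x2 y1 y2 / (4 * Ef PH b MM x1 x2 y1 y2) * y2.
Proof.
  intros Hu Hj Hd. unfold detg in Hd.
  rewrite G11, G12, G21, G22 in Hd by auto.
  assert (HE : Ef PH b MM x1 x2 y1 y2 <> 0).
  { intros HE. apply Hd. unfold Ef in HE.
    assert (HP : PH (sf b x1 x2 y1 y2) = 0).
    { apply Rmult_integral in HE. destruct HE as [HE|HE].
      - exfalso; apply (Af_pos _ _ _ _ Hu HE).
      - destruct (Req_dec (PH (sf b x1 x2 y1 y2)) 0) as [h|h]; auto. exfalso; apply (pow_nonzero _ 2 h HE). }
    rewrite (zero_Ey1_1 PH JF b MM hb HPhC _ _ _ _ Hu Hj HP).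
    rewrite (zero_Ey1_2 PH JF b MM hb HPhC _ _ _ _ Hu Hj HP).
    rewrite (zero_Ey2_1 PH JF b MM hb HPhC _ _ _ _ Hu Hj HP).
    rewrite (zero_Ey2_2 PH JF b MM hb HPhC _ _ _ _ Hu Hj HP).
    ring. }
  pose proof (Mrow1 _ _ _ _ Hu Hj) as M1. pose proof (Mrow2 _ _ _ _ Hu Hj) as M2.
  pose proof (Trow1 _ _ _ _ Hu Hj) as T1. pose proof (Trow2 _ _ _ _ Hu Hj) as T2.
  unfold spray, ginv. cbv zeta.
  rewrite G11, G12, G21, G22, S1, S2 by auto.
  set (D11 := Derive (fun t => Ey1 PH JF b MM x1 x2 t y2) y1) in *.
  set (D12 := Derive (fun t => Ey2 PH JF b MM x1 x2 t y2) y1) in *.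
  set (D21 := Derive (fun t => Ey1 PH JF b MM x1 x2 y1 t) y2) in *.
  set (D22 := Derive (fun t => Ey2 PH JF b MM x1 x2 y1 t) y2) in *.
  set (d11 := Derive (fun t => Ex1 PH JF b MM x1 x2 t y2) y1) in *.
  set (d21 := Derive (fun t => Ex2 PH JF b MM x1 x2 t y2) y1) in *.
  set (d12 := Derive (fun t => Ex1 PH JF b MM x1 x2 y1 t) y2) in *.
  set (d22 := Derive (fun t => Ex2 PH JF b MM x1 x2 y1 t) y2) in *.
  set (E := Ef PH b MM x1 x2 y1 y2) in *.
  set (DE := DEf PH HH b MM x1 x2 y1 y2) in *.
  set (X1 := Ex1 PH JF b MM x1 x2 y1 y2) in *.
  set (X2 := Ex2 PH JF b MM x1 x2 y1 y2) in *.
  set (Y1 := Ey1 PH JF b MM x1 x2 y1 y2) in *.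
  set (Y2 := Ey2 PH JF b MM x1 x2 y1 y2) in *.
  assert (ET1 : d11 * y1 + d21 * y2 - X1 = DE * Y1 / (2 * E)) by (rewrite <- ?T1, <- ?T2; field; auto).
  assert (ET2 : d12 * y1 + d22 * y2 - X2 = DE * Y2 / (2 * E)) by (rewrite <- ?T1, <- ?T2; field; auto).
  rewrite ET1, ET2. rewrite <- M1, <- M2.
  split; field; (split; [auto| intro Hc; apply Hd; transitivity (/4*(D11*D22 - D12*D21)); [field | rewrite Hc; ring]]).
Qed.

Lemma spray0 x y i : detg x y = 0 -> spray (Fmetric b c m) i x y = 0.
Proof.
  intros H. unfold detg in H. unfold spray, ginv. cbv zeta. rewrite H. unfold Rdiv. rewrite Rinv_0.
  destruct i as [|[|i]]; ring.
Qed.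

Let GG := fun z => / Rpower (b^2 - z^2) (3/2).

Lemma JF0 : JF 0 = 0.
Proof. unfold JF, jfC. rewrite Rabs_R0, pow_i by lia. unfold Rdiv. ring. Qed.

Lemma PH0 : PH 0 = 1.
Proof. unfold PH, PhC. rewrite RInt_same by lra. rewrite RInt_point. unfold zero; simpl. ring. Qed.

Lemma Hgg : forall z, -b < z < b -> ex_derive GG z.
Proof. intros z Hz. unfold GG, Rpower. assert (0 < b^2 - z^2) by nra.
  auto_derive. repeat split; try nra. apply Rgt_not_eq, exp_pos. Qed.

Lemma GG0 : GG 0 <> 0.
Proof. unfold GG, Rpower. apply Rinv_neq_0_compat, Rgt_not_eq, exp_pos. Qed.

Lemma deriv1_zero (f : R -> R) x : (forall t, f t = 0) -> deriv1 f x = 0.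
Proof. intros H. apply deriv1_is. apply (is_derive_ext (fun _ => 0)).
  { intros t. rewrite H. reflexivity. } auto_derive; auto. Qed.

Lemma degen x1 x2 y1 y2 : m = 1%nat -> c <> 0 -> x1*y1+x2*y2 <> 0 -> x2*y1 - x1*y2 = 0 ->
  detg (x1,x2) (y1,y2) = 0.
Proof.
  intros Hm1 Hc Hu Hw.
  assert (Hjk : forall z, JF z = c * Rabs z * GG z).
  { intros z. unfold JF, jfC, GG. rewrite Hm1. simpl. unfold Rdiv. ring. }
  assert (HP0 : PH 0 <> 0) by (rewrite PH0; lra).
  unfold detg, gmet. fold FF.
  destruct (Req_dec x1 0) as [Hx1|Hx1]; destruct (Req_dec x2 0) as [Hx2|Hx2].
  - exfalso. apply Hu. subst. ring.
  - subst x1. assert (y1 = 0) by (apply (Rmult_eq_reg_l x2); lra). subst y1.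
    rewrite (N1_Dy1 0 x2 0 y2 Hu), (N2_Dy1 0 x2 0 y2 Hu).
    rewrite (deriv1_nex (fun t : R => Ey1 PH JF b MM 0 x2 t y2) 0) by (exact (nd_Ey1_1 PH JF b MM hb HPhC GG c 0 x2 0 y2 Hu Hw Hjk Hgg Hc GG0 HP0 Hx2)).
    rewrite (deriv1_zero (fun t => Ey1 PH JF b MM 0 x2 0 t)) by (intros t; apply cst_Ey1; apply JF0).
    ring.
  - subst x2. assert (y2 = 0) by (apply (Rmult_eq_reg_l x1); lra). subst y2.
    rewrite (N2_Dy2 x1 0 y1 0 Hu), (N1_Dy2 x1 0 y1 0 Hu).
    rewrite (deriv1_nex (fun t : R => Ey2 PH JF b MM x1 0 y1 t) 0) by (exact (nd_Ey2_2 PH JF b MM hb HPhC GG c x1 0 y1 0 Hu Hw Hjk Hgg Hc GG0 HP0 Hx1)).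
    rewrite (deriv1_zero (fun t => Ey2 PH JF b MM x1 0 t 0)) by (intros t; apply cst_Ey2; apply JF0).
    ring.
  - rewrite (N1_Dy1 x1 x2 y1 y2 Hu), (N1_Dy2 x1 x2 y1 y2 Hu).
    rewrite (deriv1_nex (fun t : R => Ey1 PH JF b MM x1 x2 t y2) y1) by (exact (nd_Ey1_1 PH JF b MM hb HPhC GG c x1 x2 y1 y2 Hu Hw Hjk Hgg Hc GG0 HP0 Hx2)).
    rewrite (deriv1_nex (fun t : R => Ey2 PH JF b MM x1 x2 t y2) y1) by (exact (nd_Ey2_1 PH JF b MM hb HPhC GG c x1 x2 y1 y2 Hu Hw Hjk Hgg Hc GG0 HP0 Hx1 Hx2)).
    ring.
Qed.

Lemma reg_u x1 x2 y1 y2 : regular_dom b m (x1,x2) (y1,y2) -> x1*y1+x2*y2 <> 0.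
Proof.
  intros [Hx [Hy Hs]] Hu.
  assert (Hq : 0 < x1*x1+x2*x2).
  { destruct (Req_dec x1 0); destruct (Req_dec x2 0); try nra. subst. exfalso; apply Hx; reflexivity. }
  assert (HY : 0 < y1*y1+y2*y2).
  { destruct (Req_dec y1 0); destruct (Req_dec y2 0); try nra. subst. exfalso; apply Hy; reflexivity. }
  unfold beta, alpha, Defs.sigma in Hs. cbn [fst snd] in Hs.
  replace (x1^2+x2^2) with (x1*x1+x2*x2) in Hs by ring.
  replace (y1^2+y2^2) with (y1*y1+y2*y2) in Hs by ring.
  set (e := exp ((INR m - 1) * ln (x1*x1+x2*x2))) in Hs.
  assert (He : 0 < e) by apply exp_pos.
  set (R := sqrt (x1*x1+x2*x2)) in Hs. set (Y := sqrt (y1*y1+y2*y2)) in Hs.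
  assert (HR : R*R = x1*x1+x2*x2) by (apply sqrt_sqrt; lra).
  assert (HY2 : Y*Y = y1*y1+y2*y2) by (apply sqrt_sqrt; lra).
  assert (0 < R) by (apply sqrt_lt_R0; auto).
  assert (0 < Y) by (apply sqrt_lt_R0; auto).
  replace (b * e * (x2 * y1 - x1 * y2) / R / (e * Y)) with (b * (x2*y1 - x1*y2) / (R*Y)) in Hs
    by (field; repeat split; lra).
  apply Rabs_def2 in Hs.
  assert (Hw : (x2*y1 - x1*y2)^2 = (R*Y)^2).
  { replace ((R*Y)^2) with ((R*R)*(Y*Y)) by ring. rewrite HR, HY2.
    replace ((x1 * x1 + x2 * x2) * (y1 * y1 + y2 * y2)) with ((x1*y1+x2*y2)^2 + (x2*y1 - x1*y2)^2) by ring.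
    rewrite Hu. ring. }
  assert (HRY : 0 < R*Y) by nra.
  destruct Hs as [Hs2 Hs1].
  assert (Hs1' : -(R*Y) < x2*y1 - x1*y2).
  { apply (Rmult_lt_reg_l (b / (R*Y))). { apply Rdiv_lt_0_compat; lra. }
    replace (b / (R*Y) * -(R*Y)) with (-b) by (field; repeat split; try apply Rgt_not_eq; nra).
    replace (b / (R*Y) * (x2*y1 - x1*y2)) with (b * (x2*y1 - x1*y2) / (R*Y)) by (field; repeat split; try apply Rgt_not_eq; nra). lra. }
  assert (Hs2' : x2*y1 - x1*y2 < R*Y).
  { apply (Rmult_lt_reg_l (b / (R*Y))). { apply Rdiv_lt_0_compat; lra. }
    replace (b / (R*Y) * (R*Y)) with b by (field; repeat split; try apply Rgt_not_eq; nra).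
    replace (b / (R*Y) * (x2*y1 - x1*y2)) with (b * (x2*y1 - x1*y2) / (R*Y)) by (field; repeat split; try apply Rgt_not_eq; nra). lra. }
  nra.
Qed.

Definition Pfun (x y : R2) : R :=
  if Req_EM_T (detg x y) 0 then 0 else
  DEf PH HH b MM (fst x) (snd x) (fst y) (snd y) / (4 * Ef PH b MM (fst x) (snd x) (fst y) (snd y)).

Lemma flat : projectively_flat_on (Fmetric b c m) (regular_dom b m).
Proof.
  exists Pfun. intros [x1 x2] [y1 y2] Hreg.
  pose proof (reg_u _ _ _ _ Hreg) as Hu.
  unfold Pfun. destruct (Req_EM_T (detg (x1,x2) (y1,y2)) 0) as [Hd|Hd].
  - rewrite !spray0 by auto. split; ring.
  - simpl fst; simpl snd.
    assert (Hj : ex_derive JF (sf b x1 x2 y1 y2)).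
    { destruct (Compare_dec.le_lt_dec 2 m) as [H2|H2].
      - apply jfC_ex; auto. apply sbound; auto.
      - destruct (Req_dec c 0) as [Hc|Hc].
        + apply jfC_ex; auto. apply sbound; auto.
        + destruct (Req_dec (sf b x1 x2 y1 y2) 0) as [Hs|Hs].
          * exfalso. apply Hd. apply degen; auto. lia.
            pose proof (qpos_x _ _ _ _ Hu). pose proof (qpos_y _ _ _ _ Hu).
            unfold sf, qf in Hs.
            assert (0 < sqrt (x1*x1+x2*x2)) by (apply sqrt_lt_R0; auto).
            assert (0 < sqrt (y1*y1+y2*y2)) by (apply sqrt_lt_R0; auto).
            unfold Rdiv in Hs. apply Rmult_integral in Hs. destruct Hs as [Hs|Hs].
            -- apply Rmult_integral in Hs. destruct Hs; [lra|auto].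
            -- exfalso. revert Hs. apply Rinv_neq_0_compat.
               apply Rmult_integral_contrapositive_currified; lra.
          * apply jfC_ex; auto. apply sbound; auto. }
    apply nondeg; auto.
Qed.

End Main.

Lemma beta_d1 b m : is_derive (fun t => beta b m (t,0) (0,1)) 1 (-2 * b * (INR m - 1)).
Proof.
  unfold beta, Defs.sigma. simpl. auto_derive.
  - replace (1 * (1 * 1) + 0 * (0 * 1)) with 1 by ring. rewrite sqrt_1.
    repeat split; lra.
  - replace (1 * (1 * 1) + 0 * (0 * 1)) with 1 by ring. rewrite sqrt_1, ln_1.
    rewrite Rmult_0_r, exp_0. field.
Qed.

Lemma beta_d2 b m : is_derive (fun t => beta b m (1,t) (1,0)) 0 b.
Proof.
  unfold beta, Defs.sigma. simpl. auto_derive.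
  - replace (1 * (1 * 1) + 0 * (0 * 1)) with 1 by ring. rewrite sqrt_1.
    repeat split; lra.
  - replace (1 * (1 * 1) + 0 * (0 * 1)) with 1 by ring. rewrite sqrt_1, ln_1.
    rewrite Rmult_0_r, exp_0. field.
Qed.

Lemma not_closed b m : 0 < b -> (1 <= m)%nat -> ~ closed_1form (beta b m) punctured.
Proof.
  intros hb hm H. specialize (H (1,0)).
  assert (Hp : punctured (1,0)) by (unfold punctured; intro E; inversion E; lra).
  specialize (H Hp). unfold Defs.Dx in H. simpl in H.
  assert (E1 : deriv1 (fun t : R => beta b m (t,0) (0,1)) 1 = -2*b*(INR m - 1))
    by (apply deriv1_is; exact (beta_d1 b m)).
  assert (E2 : deriv1 (fun t : R => beta b m (1,t) (1,0)) 0 = b)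
    by (apply deriv1_is; exact (beta_d2 b m)).
  rewrite E1, E2 in H.
  assert (1 <= INR m) by (apply (le_INR 1); auto).
  nra.
Qed.


Theorem mainTheorem13 (b c : R) (m : nat) (hb : 0 < b) (hm : (1 <= m)%nat) :
  projectively_flat_on (Fmetric b c m) (regular_dom b m)
  /\ ~ closed_1form (beta b m) punctured.
Proof.
  split.
  - apply flat; auto.
  - apply not_closed; auto.
Qed.
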